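(* Let $(G,E,\phi_c)$ be any twisted Exel–Pardo tuple. Then the canonical algebra homomorphism $L(E)\to L(G,E,\phi_c)$, sending $v\mapsto v$, $e\mapsto e$, $e^*\mapsto e^*$ for $v\in E^0$, $e\in E^1$, is injective.
   Context: $\ell$ is a commutative unital ring, $\mathcal U(\ell)$ its unit group. A twisted Exel–Pardo tuple $(G,E,\phi_c)$: a graph $E=(E^0,E^1,r,s)$, a group $G$ acting on $E$ by graph automorphisms, $\phi:G\times E^1\to G$ with $\phi(gh,e)=\phi(g,h(e))\phi(h,e)$ and $\phi(g,e)(v)=g(v)$ for $v\in E^0$, and $c:G\times E^1\to\mathcal U(\ell)$ with $c(gh,e)=c(g,h(e))c(h,e)$. A vertex $v$ is regular if $0<|s^{-1}(v)|<\infty$. $L(G,E,\phi_c)$ is the $\ell$-algebra generated by $e,e^*$ ($e\in E^1$), $vg$ ($v\in E^0,g\in G$), $v:=v1$, subject to $e=s(e)er(e)$, $e^*=r(e)e^*s(e)$, $e^*f=\delta_{e,f}r(e)$, $(vg)(wh)=\delta_{v,g(w)}v(gh)$, $(vg)e=\delta_{v,g(s(e))}c(g,e)g(e)(r(g(e))\phi(g,e))$, $e^*(vg)=\delta_{v,s(e)}c(g,g^{-1}(e))(r(e)\phi(g,g^{-1}(e)))(g^{-1}(e))^*$, and $v=\sum_{s(e)=v}ee^*$ for every regular $v$. $L(E)$ is the Leavitt path algebra of $E$ over $\ell$. *)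

(* Defs.v *)
From mathcomp Require Import all_boot all_algebra.
From Stdlib Require List.
Set Implicit Arguments. Unset Strict Implicit. Unset Printing Implicit Defensive.
Import GRing.Theory.
Local Open Scope ring_scope.

Section FreeAlg.
Variable R : comPzRingType.

Inductive fexpr (X : Type) : Type :=
| fvar : X -> fexpr X
| fzero : fexpr X
| fadd : fexpr X -> fexpr X -> fexpr X
| fscale : R -> fexpr X -> fexpr X
| fmul : fexpr X -> fexpr X -> fexpr X.

Arguments fzero {X}.

Fixpoint fmap (X Y : Type) (f : X -> Y) (a : fexpr X) : fexpr Y :=
  match a with
  | fvar x => fvar (f x)
  | fzero => fzero
  | fadd a b => fadd (fmap f a) (fmap f b)
  | fscale r a => fscale r (fmap f a)
  | fmul a b => fmul (fmap f a) (fmap f b)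
  end.

Definition fsum (X I : Type) (l : list I) (F : I -> fexpr X) : fexpr X :=
  foldr (fun i acc => fadd (F i) acc) fzero l.

Inductive fcong (X : Type) (rels : fexpr X -> fexpr X -> Prop)
  : fexpr X -> fexpr X -> Prop :=
| fc_rel a b : rels a b -> fcong rels a b
| fc_refl a : fcong rels a a
| fc_sym a b : fcong rels a b -> fcong rels b a
| fc_trans a b c : fcong rels a b -> fcong rels b c -> fcong rels a c
| fc_add a a' b b' : fcong rels a a' -> fcong rels b b' ->
    fcong rels (fadd a b) (fadd a' b')
| fc_scale r a a' : fcong rels a a' -> fcong rels (fscale r a) (fscale r a')
| fc_mul a a' b b' : fcong rels a a' -> fcong rels b b' ->
    fcong rels (fmul a b) (fmul a' b')
| fc_addA a b c : fcong rels (fadd a (fadd b c)) (fadd (fadd a b) c)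
| fc_addC a b : fcong rels (fadd a b) (fadd b a)
| fc_add0 a : fcong rels (fadd fzero a) a
| fc_addN a : fcong rels (fadd (fscale (-1) a) a) fzero
| fc_scale1 a : fcong rels (fscale 1 a) a
| fc_scaleA r s a : fcong rels (fscale r (fscale s a)) (fscale (r * s) a)
| fc_scaleDr r a b :
    fcong rels (fscale r (fadd a b)) (fadd (fscale r a) (fscale r b))
| fc_scaleDl r s a :
    fcong rels (fscale (r + s) a) (fadd (fscale r a) (fscale s a))
| fc_mulA a b c : fcong rels (fmul a (fmul b c)) (fmul (fmul a b) c)
| fc_mulDl a b c : fcong rels (fmul (fadd a b) c) (fadd (fmul a c) (fmul b c))
| fc_mulDr a b c : fcong rels (fmul a (fadd b c)) (fadd (fmul a b) (fmul a c))
| fc_scalel r a b : fcong rels (fmul (fscale r a) b) (fscale r (fmul a b))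
| fc_scaler r a b : fcong rels (fmul a (fscale r b)) (fscale r (fmul a b)).

End FreeAlg.
Arguments fzero {R X}.
Arguments fvar {R X}.
Arguments fadd {R X}.
Arguments fscale {R X}.
Arguments fmul {R X}.

Record graph := Graph {
  vert : Type;
  edge : Type;
  rg : edge -> vert;
  sg : edge -> vert
}.

Record group := Group {
  gcar :> Type;
  gmul : gcar -> gcar -> gcar;
  gone : gcar;
  ginv : gcar -> gcar;
  gmulA : forall x y z, gmul x (gmul y z) = gmul (gmul x y) z;
  gmul1 : forall x, gmul x gone = x;
  g1mul : forall x, gmul gone x = x;
  gmulV : forall x, gmul x (ginv x) = gone;
  gVmul : forall x, gmul (ginv x) x = gone
}.

(* v is regular: 0 < |s^{-1}(v)| < oo; witnessed by a duplicate-free,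
   nonempty list enumerating exactly s^{-1}(v). *)
Definition enumerates_fiber (E : graph) (v : vert E) (l : list (edge E)) :=
  l <> nil /\ List.NoDup l /\ (forall e, List.In e l <-> sg e = v).

Definition regular (E : graph) (v : vert E) :=
  exists l, enumerates_fiber v l.

Record twisted_EP (l : comPzRingType) := TwistedEP {
  epG : group;
  epE : graph;
  actv : epG -> vert epE -> vert epE;
  acte : epG -> edge epE -> edge epE;
  actv1 : forall v, actv (gone epG) v = v;
  actvM : forall g h v, actv (gmul g h) v = actv g (actv h v);
  acte1 : forall e, acte (gone epG) e = e;
  acteM : forall g h e, acte (gmul g h) e = acte g (acte h e);
  act_r : forall g e, rg (acte g e) = actv g (rg e);
  act_s : forall g e, sg (acte g e) = actv g (sg e);
  phi : epG -> edge epE -> epG;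
  phi_cocycle : forall g h e,
      phi (gmul g h) e = gmul (phi g (acte h e)) (phi h e);
  phi_vert : forall g e v, actv (phi g e) v = actv g v;
  cc : epG -> edge epE -> l;
  cc_unit : forall g e, exists u, cc g e * u = 1;
  cc_cocycle : forall g h e, cc (gmul g h) e = cc g (acte h e) * cc h e
}.

Inductive LE_gen (E : graph) : Type :=
| LEv : vert E -> LE_gen E
| LEe : edge E -> LE_gen E
| LEs : edge E -> LE_gen E.

Inductive LE_rel (l : comPzRingType) (E : graph)
  : fexpr l (LE_gen E) -> fexpr l (LE_gen E) -> Prop :=
| LEr_vv v : LE_rel (fmul (fvar (LEv v)) (fvar (LEv v))) (fvar (LEv v))
| LEr_vw v w : v <> w -> LE_rel (fmul (fvar (LEv v)) (fvar (LEv w))) fzero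
| LEr_se e : LE_rel (fmul (fvar (LEv (sg e))) (fvar (LEe e))) (fvar (LEe e))
| LEr_er e : LE_rel (fmul (fvar (LEe e)) (fvar (LEv (rg e)))) (fvar (LEe e))
| LEr_rs e : LE_rel (fmul (fvar (LEv (rg e))) (fvar (LEs e))) (fvar (LEs e))
| LEr_ss e : LE_rel (fmul (fvar (LEs e)) (fvar (LEv (sg e)))) (fvar (LEs e))
| LEr_ee e : LE_rel (fmul (fvar (LEs e)) (fvar (LEe e))) (fvar (LEv (rg e)))
| LEr_ef e f : e <> f -> LE_rel (fmul (fvar (LEs e)) (fvar (LEe f))) fzero
| LEr_CK2 v ls : enumerates_fiber v ls ->
    LE_rel (fvar (LEv v))
           (fsum ls (fun e => fmul (fvar (LEe e)) (fvar (LEs e)))).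

Section LG.
Variables (l : comPzRingType) (T : twisted_EP l).
Local Notation G := (epG T).
Local Notation E := (epE T).

Inductive LG_gen : Type :=
| LGe : edge E -> LG_gen
| LGs : edge E -> LG_gen
| LGvg : vert E -> G -> LG_gen.

Local Notation X := (fexpr l LG_gen).
Definition xv (v : vert E) : X := fvar (LGvg v (gone G)).
Definition xvg (v : vert E) (g : G) : X := fvar (LGvg v g).
Definition xe (e : edge E) : X := fvar (LGe e).
Definition xs (e : edge E) : X := fvar (LGs e).

Inductive LG_rel : X -> X -> Prop :=
| LGr_e e : LG_rel (xe e) (fmul (fmul (xv (sg e)) (xe e)) (xv (rg e)))
| LGr_s e : LG_rel (xs e) (fmul (fmul (xv (rg e)) (xs e)) (xv (sg e)))
| LGr_ee e : LG_rel (fmul (xs e) (xe e)) (xv (rg e))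
| LGr_ef e f : e <> f -> LG_rel (fmul (xs e) (xe f)) fzero
| LGr_vgwh (v : vert E) (g : G) (w : vert E) (h : G) : v = actv g w ->
    LG_rel (fmul (xvg v g) (xvg w h)) (xvg v (gmul g h))
| LGr_vgwh0 (v : vert E) (g : G) (w : vert E) (h : G) : v <> actv g w ->
    LG_rel (fmul (xvg v g) (xvg w h)) fzero
| LGr_vge (v : vert E) (g : G) (e : edge E) : v = actv g (sg e) ->
    LG_rel (fmul (xvg v g) (xe e))
           (fscale (cc g e)
              (fmul (xe (acte g e))
                    (xvg (rg (acte g e)) (phi g e))))
| LGr_vge0 (v : vert E) (g : G) (e : edge E) : v <> actv g (sg e) ->
    LG_rel (fmul (xvg v g) (xe e)) fzero
| LGr_svg (e : edge E) (v : vert E) (g : G) : v = sg e ->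
    LG_rel (fmul (xs e) (xvg v g))
           (fscale (cc g (acte (ginv g) e))
              (fmul (xvg (rg e) (phi g (acte (ginv g) e)))
                    (xs (acte (ginv g) e))))
| LGr_svg0 (e : edge E) (v : vert E) (g : G) : v <> sg e ->
    LG_rel (fmul (xs e) (xvg v g)) fzero
| LGr_CK2 v ls : enumerates_fiber v ls ->
    LG_rel (xv v) (fsum ls (fun e => fmul (xe e) (xs e))).

Definition canon_gen (x : LE_gen E) : LG_gen :=
  match x with
  | LEv v => LGvg v (gone G)
  | LEe e => LGe e
  | LEs e => LGs e
  end.

Definition canon (a : fexpr l (LE_gen E)) : X := fmap canon_gen a.

End LG.

(* Main.v *)
From Stdlib Require Import ClassicalEpsilon FunctionalExtensionality ZArith Lia Permutation Setoid Morphisms.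
Require Import Defs.
From mathcomp Require Import all_boot all_algebra.
From mathcomp Require Import ring zify.
Set Implicit Arguments. Unset Strict Implicit. Unset Printing Implicit Defensive.
Import GRing.Theory.
Local Open Scope ring_scope.

(* Proof strategy: the LG-relations are modelled by operators on a module of
   formal combinations of states (path, end vertex, group element, degree),
   taken modulo Cuntz-Krieger expansion; the induced L(E)-representation is
   shown faithful by a reduction argument on normal forms of L(E). *)

#[export] Hint Resolve fc_refl : core.
Section FC.
Variables (R : comPzRingType) (X : Type) (rels : fexpr R X -> fexpr R X -> Prop).
Local Notation "a =f= b" := (fcong rels a b) (at level 70).

#[export] Instance fc_equiv : Equivalence (fcong rels).
Proof. split; [exact: fc_refl|exact: fc_sym|exact: fc_trans]. Qed.
#[export] Instance fc_rr : RewriteRelation (fcong rels). Qed.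
#[export] Instance fadd_proper : Proper (fcong rels ==> fcong rels ==> fcong rels) (@fadd R X).
Proof. by move=> a a' H b b' H'; apply: fc_add. Qed.
#[export] Instance fmul_proper : Proper (fcong rels ==> fcong rels ==> fcong rels) (@fmul R X).
Proof. by move=> a a' H b b' H'; apply: fc_mul. Qed.
#[export] Instance fscale_proper r : Proper (fcong rels ==> fcong rels) (@fscale R X r).
Proof. by move=> a a' H; apply: fc_scale. Qed.

Lemma fadd0r a : fadd a fzero =f= a.
Proof. by rewrite fc_addC fc_add0. Qed.
Lemma fscale0 a : fscale 0 a =f= fzero.
Proof.
have -> : (0 : R) = -1 + 1 by rewrite addNr.
by rewrite fc_scaleDl fc_scale1 fc_addN.
Qed.
Lemma fscale_zero r : fscale r (@fzero R X) =f= fzero.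
Proof. rewrite -{1}(fscale0 fzero) fc_scaleA mulr0. exact: fscale0. Qed.
Lemma fmul0l a : fmul fzero a =f= fzero.
Proof. rewrite -{1}(fscale0 fzero) fc_scalel. exact: fscale0. Qed.
Lemma fmul0r a : fmul a fzero =f= fzero.
Proof. rewrite -{1}(fscale0 fzero) fc_scaler. exact: fscale0. Qed.
Lemma fsub_eq a b : fadd a (fscale (-1) b) =f= fzero -> a =f= b.
Proof.
move=> H. rewrite -(fadd0r a) -(fc_addN rels b) fc_addA H fc_add0 //.
Qed.
Lemma fscale_r_add r s a : fadd (fscale r a) (fscale s a) =f= fscale (r + s) a.
Proof. by rewrite fc_scaleDl. Qed.
End FC.

Section Main.
Variable l : comPzRingType.
Variable T : twisted_EP l.
Local Notation G := (epG T).
Local Notation E := (epE T).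
Local Notation V := (vert E).
Local Notation Ed := (edge E).
Local Notation g1 := (gone G).
Local Notation LGX := (fexpr l (LG_gen T)).
Local Notation LEX := (fexpr l (LE_gen E)).
Local Notation "a ~G b" := (fcong (@LG_rel l T) a b) (at level 70).
Local Notation "a ~E b" := (fcong (@LE_rel l E) a b) (at level 70).
Local Notation vv v := (fvar (LEv v) : LEX).
Local Notation ve e := (fvar (LEe e) : LEX).
Local Notation vs e := (fvar (LEs e) : LEX).

Definition dec (P : Prop) : bool := if excluded_middle_informative P then true else false.
Lemma decT (P : Prop) : P -> dec P = true.
Proof. by rewrite /dec; case: excluded_middle_informative. Qed.
Lemma decF (P : Prop) : ~ P -> dec P = false.
Proof. by rewrite /dec; case: excluded_middle_informative. Qed.
Lemma decP (P : Prop) : reflect P (dec P).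
Proof. rewrite /dec; case: excluded_middle_informative => H; by constructor. Qed.


Lemma gcancel (x y z : G) : gmul x y = gmul x z -> y = z.
Proof.
move=> H. have := f_equal (gmul (ginv x)) H.
by rewrite !gmulA gVmul !g1mul.
Qed.
Lemma gidem (x : G) : gmul x x = x -> x = g1.
Proof. by move=> H; apply: (@gcancel x); rewrite H gmul1. Qed.
Lemma ginv1 : ginv g1 = g1.
Proof. by have := gmulV g1; rewrite g1mul. Qed.
Lemma ginvM (x y : G) : ginv (gmul x y) = gmul (ginv y) (ginv x).
Proof.
apply: (@gcancel (gmul x y)). rewrite gmulV -!gmulA (gmulA y) gmulV g1mul gmulV //.
Qed.
Lemma phi1 e : phi g1 e = g1.
Proof. apply: gidem. by rewrite -{3}(g1mul g1) phi_cocycle acte1. Qed.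
Lemma cc1 e : cc g1 e = 1.
Proof.
have H : cc g1 e = cc g1 e * cc g1 e by rewrite -{1}(g1mul g1) cc_cocycle acte1.
have [u Hu] := cc_unit g1 e.
have := f_equal (fun x => x * u) H. rewrite /= -mulrA Hu mulr1 => E.
exact: esym E.
Qed.
Lemma actvV (g : G) v : actv (ginv g) (actv g v) = v.
Proof. by rewrite -actvM gVmul actv1. Qed.
Lemma actvV' (g : G) v : actv g (actv (ginv g) v) = v.
Proof. by rewrite -actvM gmulV actv1. Qed.
Lemma acteV (g : G) e : acte (ginv g) (acte g e) = e.
Proof. by rewrite -acteM gVmul acte1. Qed.
Lemma acteV' (g : G) e : acte g (acte (ginv g) e) = e.
Proof. by rewrite -acteM gmulV acte1. Qed.
Lemma actv_inj (g : G) v w : actv g v = actv g w -> v = w.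
Proof. by move=> H; rewrite -(actvV g v) H actvV. Qed.
Lemma acte_inj (g : G) e f : acte g e = acte g f -> e = f.
Proof. by move=> H; rewrite -(acteV g e) H acteV. Qed.

Fixpoint gpa (g : G) (a : seq Ed) : seq Ed :=
  if a is e :: a' then acte g e :: gpa (phi g e) a' else [::].
Fixpoint gphi (g : G) (a : seq Ed) : G :=
  if a is e :: a' then gphi (phi g e) a' else g.
Fixpoint gc (g : G) (a : seq Ed) : l :=
  if a is e :: a' then cc g e * gc (phi g e) a' else 1.

Lemma gpa1 a : gpa g1 a = a.
Proof. by elim: a => //= e a IH; rewrite acte1 phi1 IH. Qed.
Lemma gphi1 a : gphi g1 a = g1.
Proof. by elim: a => //= e a IH; rewrite phi1 IH. Qed.
Lemma gc1 a : gc g1 a = 1.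
Proof. by elim: a => //= e a IH; rewrite phi1 IH cc1 mulr1. Qed.
Lemma gpaM g h a : gpa (gmul g h) a = gpa g (gpa h a).
Proof.
by elim: a g h => //= e a IH g h; rewrite acteM phi_cocycle IH.
Qed.
Lemma gphiM g h a : gphi (gmul g h) a = gmul (gphi g (gpa h a)) (gphi h a).
Proof. by elim: a g h => //= e a IH g h; rewrite phi_cocycle IH. Qed.
Lemma gcM g h a : gc (gmul g h) a = gc g (gpa h a) * gc h a.
Proof.
elim: a g h => /= [|e a IH] g h; first by rewrite mulr1.
rewrite phi_cocycle IH cc_cocycle. ring.
Qed.
Lemma gpa_app g a e : gpa g (a ++ [:: e]) = gpa g a ++ [:: acte (gphi g a) e].
Proof. by elim: a g => //= f a IH g; rewrite IH. Qed.
Lemma gphi_app g a e : gphi g (a ++ [:: e]) = phi (gphi g a) e.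
Proof. by elim: a g => //= f a IH g; rewrite IH. Qed.
Lemma gc_app g a e : gc g (a ++ [:: e]) = gc g a * cc (gphi g a) e.
Proof. elim: a g => /= [|f a IH] g; first by rewrite mulr1 mul1r. by rewrite IH mulrA. Qed.
Lemma gphi_vert g a v : actv (gphi g a) v = actv g v.
Proof. by elim: a g => //= e a IH g; rewrite IH phi_vert. Qed.
Lemma size_gpa g a : size (gpa g a) = size a.
Proof. by elim: a g => //= e a IH g; rewrite IH. Qed.

Record st := St { sa : seq Ed; sw : V; sh : G; sn : Z }.
Definition startv (a : seq Ed) (w : V) : V := if a is e :: _ then sg e else w.
Fixpoint vpath (a : seq Ed) (w : V) : Prop :=
  if a is e :: a' then rg e = startv a' w /\ vpath a' w else True.
Definition valid (x : st) := vpath (sa x) (sw x).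
Definition stv (x : st) := startv (sa x) (sw x).

Lemma startv_gpa g a w : startv (gpa g a) (actv g w) = actv g (startv a w).
Proof. by case: a => //= e a; rewrite act_s. Qed.
Lemma vpath_gpa g a w : vpath a w -> vpath (gpa g a) (actv g w).
Proof.
elim: a g => //= e a IH g [H1 H2]; split; last by rewrite -(phi_vert g e w); apply: IH.
by rewrite act_r H1 -(phi_vert g e w) startv_gpa phi_vert.
Qed.
Lemma vpath_app a w e : vpath a w -> sg e = w -> vpath (a ++ [:: e]) (rg e).
Proof.
elim: a => /= [|f a IH] Hv He; first by split.
case: Hv => H1 H2; split; last by apply: IH.
by case: a {IH H2} H1 => //=; rewrite He.
Qed.
Lemma startv_app a w e : sg e = w -> startv (a ++ [:: e]) (rg e) = startv a w.
Proof. by case: a. Qed.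

Definition vec := seq (l * st).
Definition coef (F : vec) (y : st) : l :=
  foldr (fun p acc => (if dec (p.2 = y) then p.1 else 0) + acc) 0 F.
Definition scalev (r : l) (F : vec) : vec := map (fun p => (r * p.1, p.2)) F.
Definition lin (A : st -> vec) (F : vec) : vec :=
  flatten (map (fun p => scalev p.1 (A p.2)) F).
Definition ceq (F G : vec) := forall y, coef F y = coef G y.
Definition lsum (F : vec) (t : st -> l) : l := foldr (fun p acc => p.1 * t p.2 + acc) 0 F.

Lemma coef_cat F G y : coef (F ++ G) y = coef F y + coef G y.
Proof. by elim: F => /= [|p F IH]; rewrite ?add0r // IH addrA. Qed.
Lemma coef_scalev r F y : coef (scalev r F) y = r * coef F y.
Proof.
elim: F => /= [|p F IH]; first by rewrite mulr0.
by rewrite IH mulrDr; case: decP => _; rewrite ?mulr0.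
Qed.
Lemma coef_nil y : coef [::] y = 0. Proof. by []. Qed.
Lemma coef_single r x y : coef [:: (r, x)] y = if dec (x = y) then r else 0.
Proof. by rewrite /= addr0. Qed.
Lemma lin_cat A F G : lin A (F ++ G) = lin A F ++ lin A G.
Proof. by rewrite /lin map_cat flatten_cat. Qed.
Lemma lin_cons A r x F : lin A ((r, x) :: F) = scalev r (A x) ++ lin A F.
Proof. by []. Qed.
Lemma lin_nil A : lin A [::] = [::]. Proof. by []. Qed.
Lemma coef_lin A F y : coef (lin A F) y = lsum F (fun x => coef (A x) y).
Proof.
elim: F => //= [[r x] F IH]. by rewrite lin_cons coef_cat coef_scalev IH.
Qed.

Lemma ceq_refl F : ceq F F. Proof. by []. Qed.
Lemma ceq_sym F G : ceq F G -> ceq G F. Proof. by move=> H y. Qed.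
Lemma ceq_trans F G H : ceq F G -> ceq G H -> ceq F H.
Proof. by move=> H1 H2 y; rewrite H1. Qed.
Lemma ceq_cat F F' G G' : ceq F F' -> ceq G G' -> ceq (F ++ G) (F' ++ G').
Proof. by move=> H1 H2 y; rewrite !coef_cat H1 H2. Qed.
Lemma ceq_scalev r F F' : ceq F F' -> ceq (scalev r F) (scalev r F').
Proof. by move=> H y; rewrite !coef_scalev H. Qed.

Fixpoint dd (s : seq st) : seq st :=
  if s is x :: s' then (if dec (List.In x s') then dd s' else x :: dd s') else [::].
Lemma dd_in s x : List.In x (dd s) <-> List.In x s.
Proof.
elim: s => //= y s IH. case: decP => H.
  by rewrite IH; split; [right|case=> // <-].
by rewrite /= IH.
Qed.
Lemma dd_nodup s : List.NoDup (dd s).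
Proof.
elim: s => /= [|y s IH]; first by constructor.
case: decP => H //; constructor => //. by rewrite dd_in.
Qed.
Definition ssum (S : seq st) (f : st -> l) : l := foldr (fun x acc => f x + acc) 0 S.
Lemma ssumD S f g : ssum S (fun x => f x + g x) = ssum S f + ssum S g.
Proof. elim: S => /= [|x S IH]; first by rewrite addr0. rewrite IH. ring. Qed.
Lemma ssum_delta S x0 (t : st -> l) :
  List.NoDup S -> ssum S (fun x => (if dec (x0 = x) then t x else 0)) =
                   if dec (List.In x0 S) then t x0 else 0.
Proof.
elim: S => /= [|x S IH] Hn; first by rewrite decF.
inversion Hn; subst. rewrite IH //.
case: (decP (x0 = x)) => [E|Hx].
  subst x. rewrite (decF H1) addr0 decT //; by left.
rewrite add0r. case: decP => Ha; case: decP => Hb //.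
- by exfalso; apply: Hb; right.
- by exfalso; case: Hb => // E; apply: Hx.
Qed.
Lemma lsum_supp F t S : List.NoDup S -> (forall p, List.In p F -> List.In p.2 S) ->
  lsum F t = ssum S (fun x => coef F x * t x).
Proof.
move=> Hn; elim: F => /= [|[r x0] F IH] HF.
  clear HF Hn; by elim: S => //= x S IH; rewrite mul0r add0r.
rewrite IH; last by move=> p Hp; apply: HF; right.
have -> : (fun x => ((if dec (x0 = x) then r else 0) + coef F x) * t x) =
  (fun x => (if dec (x0 = x) then r * t x else 0) + coef F x * t x).
  by apply: functional_extensionality => x; rewrite mulrDl; case: decP; rewrite ?mul0r.
rewrite ssumD ssum_delta // decT //. by have := HF (r, x0); apply; left.
Qed.
Lemma lsum_ceq F G t : ceq F G -> lsum F t = lsum G t.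
Proof.
move=> H. pose S := dd (map snd (F ++ G)).
have HS : forall p, List.In p (F ++ G) -> List.In p.2 S.
  by move=> p Hp; rewrite dd_in; apply: List.in_map.
have HN : List.NoDup S by apply: dd_nodup.
rewrite (@lsum_supp F t S HN); last first.
  by move=> p Hp; apply: HS; apply: List.in_or_app; left.
rewrite (@lsum_supp G t S HN); last first.
  by move=> p Hp; apply: HS; apply: List.in_or_app; right.
by congr ssum; apply: functional_extensionality => x; rewrite H.
Qed.
Lemma ceq_lin A F G : ceq F G -> ceq (lin A F) (lin A G).
Proof. by move=> H y; rewrite !coef_lin; apply: lsum_ceq. Qed.
Lemma lin_ext A B F : (forall x, ceq (A x) (B x)) -> ceq (lin A F) (lin B F).
Proof.
move=> H y; rewrite !coef_lin. elim: F => //= p F IH. by rewrite IH H.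
Qed.
Lemma lin_scalev A r F : ceq (lin A (scalev r F)) (scalev r (lin A F)).
Proof.
move=> y; rewrite coef_scalev !coef_lin. elim: F => /= [|p F IH]; first by rewrite mulr0.
rewrite IH. ring.
Qed.
Lemma lin_lin A B F : ceq (lin A (lin B F)) (lin (fun x => lin A (B x)) F).
Proof.
elim: F => //= [[r x] F IH]. rewrite !lin_cons lin_cat.
apply: ceq_cat => //. exact: lin_scalev.
Qed.
Lemma lin_single A r x : ceq (lin A [:: (r, x)]) (scalev r (A x)).
Proof. by move=> y; rewrite lin_cons coef_cat /= addr0. Qed.
Lemma lin_single1 A x : ceq (lin A [:: (1, x)]) (A x).
Proof. by move=> y; rewrite lin_single coef_scalev mul1r. Qed.
Lemma lin_kill A F : (forall p, List.In p F -> A p.2 = [::]) -> lin A F = [::].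
Proof.
elim: F => //= p F IH H. rewrite /lin /= H ?[in X in X ++ _]/= ; last by left.
by apply: IH => q Hq; apply: H; right.
Qed.
Lemma lin_flat A (L : seq Ed) (c : Ed -> l) (B : Ed -> vec) :
  ceq (lin A (flatten (map (fun f => scalev (c f) (B f)) L)))
      (flatten (map (fun f => scalev (c f) (lin A (B f))) L)).
Proof.
elim: L => //= f L IH. rewrite lin_cat. apply: ceq_cat => //. exact: lin_scalev.
Qed.
Lemma ceq_flat (L : seq Ed) (X Y : Ed -> vec) : (forall f, ceq (X f) (Y f)) ->
  ceq (flatten (map X L)) (flatten (map Y L)).
Proof. move=> H; elim: L => //= f L IH; exact: ceq_cat. Qed.
Lemma flat_single (L : seq Ed) (P : Ed -> Prop) (X : Ed -> vec) f0 :
  List.NoDup L -> List.In f0 L -> (forall f, P f <-> f = f0) ->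
  ceq (flatten (map (fun f => if dec (P f) then X f else [::]) L)) (X f0).
Proof.
move=> Hn Hin HP. elim: L Hn Hin => //= f L IH Hn Hin. inversion Hn; subst.
case: Hin => [Hf|Hin].
  subst f. rewrite decT ?HP //. have -> : flatten (map (fun f => if dec (P f) then X f else [::]) L) = [::].
    clear IH Hn H2. elim: L H1 => //= g L IH' Hg. rewrite decF ?IH' //.
      by move=> H; apply: Hg; right.
    by rewrite HP => E; subst; apply: Hg; left.
  by rewrite cats0.
rewrite decF; first by apply: IH.
by rewrite HP => E; subst.
Qed.


Definition op_e (e : Ed) (x : st) : vec :=
  if dec (valid x /\ rg e = stv x)
  then [:: (1, St (e :: sa x) (sw x) (sh x) (Z.add (sn x) 1))] else [::].
Definition op_s (e : Ed) (x : st) : vec :=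
  if dec (valid x) then
    match sa x with
    | f :: a => if dec (f = e) then [:: (1, St a (sw x) (sh x) (Z.sub (sn x) 1))] else [::]
    | [::] => if dec (sg e = sw x /\ regular (sw x))
              then [:: (cc (sh x) (acte (ginv (sh x)) e),
                        St [::] (rg e) (phi (sh x) (acte (ginv (sh x)) e)) (Z.sub (sn x) 1))]
              else [::]
    end
  else [::].
Definition op_vg (v : V) (g : G) (x : st) : vec :=
  if dec (valid x /\ v = actv g (stv x))
  then [:: (gc g (sa x), St (gpa g (sa x)) (actv g (sw x)) (gmul (gphi g (sa x)) (sh x)) (sn x))]
  else [::].

Definition fib (v : V) : seq Ed :=
  match excluded_middle_informative (regular v) with
  | left H => proj1_sig (constructive_indefinite_description _ H)
  | right _ => [::]
  end.
Lemma fib_enum v : regular v -> enumerates_fiber v (fib v).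
Proof.
rewrite /fib; case: excluded_middle_informative => // H _.
by case: constructive_indefinite_description.
Qed.

Lemma nodup_map_inj (A B : Type) (f : A -> B) (s : seq A) :
  (forall x y, f x = f y -> x = y) -> List.NoDup s -> List.NoDup (map f s).
Proof.
move=> Hf; elim: s => /= [|x s IH] H; first by constructor.
inversion H; subst; constructor; last by apply: IH.
move=> Hin; apply: H2. case: (List.in_map_iff f s (f x)) => H' _.
by case: (H' Hin) => y [/Hf -> ].
Qed.

Lemma regular_act (g : G) v : regular v -> regular (actv g v).
Proof.
case=> ls [Hne [Hnd Hin]]. exists (map (acte g) ls); split; last split.
- by case: ls Hne {Hnd Hin}.
- by apply: nodup_map_inj => //; apply: acte_inj.
- move=> e; split.
    case/List.in_map_iff => f [<- Hf]. by rewrite act_s (proj1 (Hin f) Hf).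
  move=> He. apply/List.in_map_iff; exists (acte (ginv g) e); split; first exact: acteV'.
  by apply/Hin; rewrite act_s He actvV.
Qed.
Lemma regular_actE (g : G) v : regular (actv g v) <-> regular v.
Proof.
split; last exact: regular_act.
by move=> H; rewrite -(actvV g v); apply: regular_act.
Qed.

Definition tv (x : st) : V := actv (ginv (sh x)) (sw x).
Definition expd (x : st) : Prop := valid x /\ regular (tv x).
Definition xst (x : st) (f : Ed) : st :=
  St (sa x ++ [:: acte (sh x) f]) (rg (acte (sh x) f)) (phi (sh x) f) (sn x).

Fixpoint Ex (k : nat) (x : st) : vec :=
  if k is k'.+1 then
    if dec (expd x)
    then flatten (map (fun f => scalev (cc (sh x) f) (Ex k' (xst x f))) (fib (tv x)))
    else [:: (1, x)]
  else [:: (1, x)].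

Lemma fib_sg v f : List.In f (fib v) -> sg f = v.
Proof.
rewrite /fib; case: excluded_middle_informative => // H.
case: constructive_indefinite_description => /= ls [_ [_ Hin]]. by move/Hin.
Qed.
Lemma fib_nodup v : List.NoDup (fib v).
Proof.
rewrite /fib; case: excluded_middle_informative => [H|_]; last by constructor.
by case: constructive_indefinite_description => /= ls [_ [Hn _]].
Qed.
Lemma fib_in v f : regular v -> sg f = v -> List.In f (fib v).
Proof. by move=> /fib_enum [_ [_ H]] Hf; apply/H. Qed.

Lemma in_flat_scalev (L : seq Ed) (c : Ed -> l) (B : Ed -> vec) p :
  List.In p (flatten (map (fun f => scalev (c f) (B f)) L)) ->
  exists f q, List.In f L /\ List.In q (B f) /\ p = (c f * q.1, q.2).
Proof.
elim: L => //= f L IH Hin; case: (List.in_app_or _ _ _ Hin) => H.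
  case: (proj1 (List.in_map_iff _ _ _) H) => q [<- Hq]. by exists f, q; split; [left|].
case: (IH H) => f' [q [H1 [H2 H3]]]. by exists f', q; split; [right|].
Qed.

Lemma stv_xst x f : List.In f (fib (tv x)) -> stv (xst x f) = stv x.
Proof.
move=> /fib_sg Hf. rewrite /stv /xst /=. apply: startv_app.
by rewrite act_s Hf /tv actvV'.
Qed.
Lemma valid_xst x f : valid x -> List.In f (fib (tv x)) -> valid (xst x f).
Proof.
move=> Hv /fib_sg Hf. rewrite /valid /xst /=. apply: vpath_app => //.
by rewrite act_s Hf /tv actvV'.
Qed.

Lemma Ex_shape k x p : List.In p (Ex k x) ->
  [/\ sn p.2 = sn x, stv p.2 = stv x, (exists b, sa p.2 = sa x ++ b),
      (valid x -> valid p.2) & (~ valid x -> p.2 = x)].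
Proof.
elim: k x p => [|k IH] x p /=.
  case=> // <-; split=> //; by exists [::]; rewrite cats0.
case: decP => Hx; last by case=> // <-; split=> //; exists [::]; rewrite cats0.
move=> Hp; have [f [q [Hf [Hq Hpe]]]] := in_flat_scalev Hp; rewrite Hpe /=.
case: (IH _ _ Hq) => H1 H2 [b Hb] H4 H5. split.
- by rewrite H1.
- by rewrite H2 stv_xst.
- by exists (acte (sh x) f :: b); rewrite Hb /xst /= -catA.
- by move=> Hv; apply: H4; apply: valid_xst.
- by move=> Hv; case: Hv; case: Hx.
Qed.

Lemma Ex_invalid k x : ~ valid x -> Ex k x = [:: (1, x)].
Proof. by case: k => //= k H; rewrite decF // => -[]. Qed.

Lemma kill_shape (A : st -> vec) k x :
  (forall z, stv z = stv x -> (valid x -> valid z) -> (~ valid x -> z = x) ->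
     (exists b, sa z = sa x ++ b) -> A z = [::]) ->
  lin A (Ex k x) = [::].
Proof.
move=> H; apply: lin_kill => p /Ex_shape [_ H2 H3 H4 H5]. exact: H.
Qed.

Lemma lin_Ex0 F : ceq (lin (Ex 0) F) F.
Proof.
elim: F => //= [[r x] F IH] y. rewrite lin_cons coef_cat IH /= mulr1 addr0 //.
Qed.

Lemma Ex_mono k j x : (k = 0 \/ size (sa x) + k <= j)%N ->
  ceq (lin (fun z => Ex (j - size (sa z)) z) (Ex k x)) (Ex (j - size (sa x)) x).
Proof.
elim: k x => [|k IH] x Hk; first exact: lin_single1.
case: Hk => // Hk.
rewrite [Ex k.+1 x]/=. case: decP => Hx; last by apply: lin_single1.
have -> : (j - size (sa x))%N = (j - size (sa x)).-1.+1 by rewrite prednK //; lia.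
rewrite [Ex _.+1 x]/= decT //.
apply: ceq_trans; first exact: lin_flat.
apply: ceq_flat => f. apply: ceq_scalev. apply: ceq_trans; first apply: IH.
  by right; rewrite /xst /= size_cat /=; lia.
rewrite /xst /= size_cat /=. have -> : (j - (size (sa x) + 1))%N = (j - size (sa x)).-1 by lia. by [].
Qed.


Definition ExD (D : nat) (x : st) : vec := Ex (D - size (sa x)) x.
Definition ExV (D : nat) (F : vec) : vec := lin (ExD D) F.
Definition approx (F G : vec) := exists D, ceq (ExV D F) (ExV D G).

Lemma ExV_mono D D' F : (D <= D')%N -> ceq (ExV D' (ExV D F)) (ExV D' F).
Proof.
move=> HD. apply: ceq_trans; first exact: lin_lin.
apply: lin_ext => x. rewrite /ExD. apply: Ex_mono. lia.
Qed.
Lemma approx_up D D' F G : (D <= D')%N -> ceq (ExV D F) (ExV D G) -> ceq (ExV D' F) (ExV D' G).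
Proof.
move=> HD H. apply: ceq_trans; first exact: ceq_sym (ExV_mono F HD).
apply: ceq_trans; first exact: ceq_lin H. exact: ExV_mono.
Qed.
Lemma approx_refl F : approx F F. Proof. by exists 0%N. Qed.
Lemma approx_sym F G : approx F G -> approx G F.
Proof. by case=> D H; exists D; apply: ceq_sym. Qed.
Lemma approx_trans F G H : approx F G -> approx G H -> approx F H.
Proof.
case=> D1 H1 [D2 H2]; exists (maxn D1 D2).
apply: ceq_trans; first by apply: (approx_up _ H1); rewrite leq_maxl.
by apply: (approx_up _ H2); rewrite leq_maxr.
Qed.
Lemma ceq_approx F G : ceq F G -> approx F G.
Proof. by move=> H; exists 0%N; apply: ceq_lin. Qed.
Lemma approx_cat F F' G G' : approx F F' -> approx G G' -> approx (F ++ G) (F' ++ G').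
Proof.
case=> D1 H1 [D2 H2]; exists (maxn D1 D2). rewrite /ExV !lin_cat.
apply: ceq_cat; [by apply: (approx_up _ H1); rewrite leq_maxl|by apply: (approx_up _ H2); rewrite leq_maxr].
Qed.
Lemma approx_scalev r F G : approx F G -> approx (scalev r F) (scalev r G).
Proof.
case=> D H; exists D. apply: ceq_trans; first exact: lin_scalev.
apply: ceq_trans; last exact: ceq_sym (lin_scalev _ _ _). exact: ceq_scalev.
Qed.
Lemma approx_ceq F F' G G' : ceq F F' -> ceq G G' -> approx F' G' -> approx F G.
Proof.
move=> H1 H2 H. apply: approx_trans; first exact: ceq_approx H1.
apply: approx_trans; first exact: H. exact: ceq_approx (ceq_sym H2).
Qed.

Lemma ceq_flat_in (L : seq Ed) (X Y : Ed -> vec) : (forall f, List.In f L -> ceq (X f) (Y f)) ->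
  ceq (flatten (map X L)) (flatten (map Y L)).
Proof.
elim: L => //= f L IH H; apply: ceq_cat; first by apply: H; left.
by apply: IH => g Hg; apply: H; right.
Qed.
Lemma tv_vg g x : tv (St (gpa g (sa x)) (actv g (sw x)) (gmul (gphi g (sa x)) (sh x)) (sn x)) = tv x.
Proof.
rewrite /tv /= ginvM actvM. congr actv.
by rewrite -(gphi_vert g (sa x) (sw x)) actvV.
Qed.

Lemma Ex_op_e e k x : ceq (lin (Ex k) (op_e e x)) (lin (op_e e) (Ex k x)).
Proof.
elim: k x => [|k IH] x.
  by apply: ceq_trans; [exact: lin_Ex0|exact: ceq_sym (lin_single1 _ _)].
rewrite /op_e; case: decP => H; last first.
  rewrite lin_nil kill_shape //= => z Hs Hv Hz _. rewrite /op_e decF //.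
  case=> Hvz Hr; apply: H. case: (decP (valid x)) => Hvx.
    by split=> //; rewrite -Hs.
  by rewrite -(Hz Hvx).
case: H => Hv Hr.
set x' := St _ _ _ _.
apply: ceq_trans; first exact: lin_single1.
have Hex : expd x' <-> expd x.
  rewrite /expd /valid /tv /=; split; first by case=> [[_ H1] H2].
  by case=> H1 H2; split => //; split.
rewrite /= ; case: (decP (expd x)) => Hx; last first.
  rewrite decF; last by rewrite Hex.
  apply: ceq_sym; apply: ceq_trans; first exact: lin_single1.
  by rewrite /op_e decT.
rewrite decT; last by rewrite Hex.
apply: ceq_sym; apply: ceq_trans; first exact: lin_flat.
apply: ceq_flat_in => f Hf. apply: ceq_scalev. apply: ceq_trans; first exact: ceq_sym (IH _).
rewrite /op_e decT; first exact: lin_single1.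
by split; [apply: valid_xst|rewrite stv_xst].
Qed.

Lemma scalev_flat a (L : seq Ed) (b : Ed -> l) (Y : Ed -> vec) :
  ceq (scalev a (flatten (map (fun f => scalev (b f) (Y f)) L)))
      (flatten (map (fun f => scalev (a * b f) (Y f)) L)).
Proof.
elim: L => //= f L IH y. rewrite coef_scalev !coef_cat !coef_scalev -IH coef_scalev. ring.
Qed.
Lemma flat_nil (L : seq Ed) (X : Ed -> vec) : (forall f, List.In f L -> ceq (X f) [::]) ->
  ceq (flatten (map X L)) [::].
Proof.
elim: L => //= f L IH H y. rewrite coef_cat H ?IH //=; first by rewrite addr0.
  by move=> g Hg; apply: H; right.
by left.
Qed.

Lemma xst_vg g x f :
  St (gpa g (sa x ++ [:: acte (sh x) f])) (actv g (rg (acte (sh x) f)))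
     (gmul (gphi g (sa x ++ [:: acte (sh x) f])) (phi (sh x) f)) (sn x)
  = xst (St (gpa g (sa x)) (actv g (sw x)) (gmul (gphi g (sa x)) (sh x)) (sn x)) f.
Proof.
by rewrite /xst /= gpa_app gphi_app acteM phi_cocycle !act_r gphi_vert.
Qed.

Lemma Ex_op_vg v g k x : ceq (lin (Ex k) (op_vg v g x)) (lin (op_vg v g) (Ex k x)).
Proof.
elim: k x => [|k IH] x.
  by apply: ceq_trans; [exact: lin_Ex0|exact: ceq_sym (lin_single1 _ _)].
rewrite {1}/op_vg; case: decP => H; last first.
  rewrite lin_nil kill_shape //= => z Hs Hv Hz _. rewrite /op_vg decF //.
  case=> Hvz Hr; apply: H. case: (decP (valid x)) => Hvx.
    by split=> //; rewrite -Hs.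
  by rewrite -(Hz Hvx).
case: H => Hv Hvv.
apply: ceq_trans; first exact: lin_single.
have Hex : expd (St (gpa g (sa x)) (actv g (sw x)) (gmul (gphi g (sa x)) (sh x)) (sn x)) <-> expd x.
  rewrite /expd tv_vg; split; case=> H1 H2 //; split => //. exact: vpath_gpa.
rewrite [Ex k.+1 (St _ _ _ _)]/= [Ex k.+1 x]/=.
case: (decP (expd x)) => Hx; last first.
  rewrite decF; last by rewrite Hex.
  apply: ceq_sym; apply: ceq_trans; first exact: lin_single1.
  rewrite /op_vg decT // => y /=. by rewrite !addr0 mulr1.
rewrite decT; last by rewrite Hex.
rewrite tv_vg.
apply: ceq_trans; first exact: scalev_flat.
apply: ceq_sym; apply: ceq_trans; first exact: lin_flat.
apply: ceq_flat_in => f Hf. apply: ceq_trans; first exact: ceq_scalev (ceq_sym (IH _)).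
rewrite /op_vg decT; last by split; [apply: valid_xst|rewrite stv_xst].
rewrite xst_vg.
move=> y. rewrite coef_scalev lin_single !coef_scalev /= gc_app cc_cocycle. ring.
Qed.

Lemma op_s_cons e f a w h n : op_s e (St (f :: a) w h n) =
  if dec (valid (St (f :: a) w h n)) then
    (if dec (f = e) then [:: (1, St a w h (Z.sub n 1))] else [::]) else [::].
Proof. by []. Qed.

Lemma Ex_op_s1 e k x : sa x <> [::] -> ceq (lin (Ex k) (op_s e x)) (lin (op_s e) (Ex k x)).
Proof.
elim: k x => [|k IH] x Hne.
  by apply: ceq_trans; [exact: lin_Ex0|exact: ceq_sym (lin_single1 _ _)].
case: x Hne => [[|f a] w h n] // _.
rewrite {1}op_s_cons. case: (decP (valid (St (f :: a) w h n))) => Hv; last first.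
  rewrite Ex_invalid //. apply: ceq_sym; apply: ceq_trans; first exact: lin_single1.
  by rewrite /op_s decF.
case: (decP (f = e)) => Hfe; last first.
  rewrite lin_nil kill_shape // => z Hs Hvz Hz [b Hb].
  by rewrite /op_s decT ?Hb /= ?decF //; apply: Hvz.
subst f.
apply: ceq_trans; first exact: lin_single1.
have Hva : vpath a w by case: Hv.
rewrite [Ex k.+1 (St a _ _ _)]/= [Ex k.+1 (St (e :: a) _ _ _)]/=.
have Hex : expd (St a w h (Z.sub n 1)) <-> expd (St (e :: a) w h n).
  by rewrite /expd /tv /=; split; case=> H1 H2; split.
case: (decP (expd (St (e :: a) w h n))) => Hx; last first.
  rewrite decF; last by rewrite Hex.
  apply: ceq_sym; apply: ceq_trans; first exact: lin_single1.
  by rewrite /op_s decT //= decT.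
rewrite decT; last by rewrite Hex.
apply: ceq_sym; apply: ceq_trans; first exact: lin_flat.
apply: ceq_flat_in => f Hf. apply: ceq_scalev.
apply: ceq_trans; first exact: ceq_sym (IH _ _).
  rewrite /op_s decT; last exact: valid_xst.
  by rewrite /= decT //; apply: lin_single1.
Qed.

Lemma op_s_nil e w h n : op_s e (St [::] w h n) =
  if dec (sg e = w /\ regular w)
  then [:: (cc h (acte (ginv h) e), St [::] (rg e) (phi h (acte (ginv h) e)) (Z.sub n 1))]
  else [::].
Proof. by rewrite /op_s decT. Qed.

Lemma Ex_op_s0 e k x : sa x = [::] -> ceq (lin (Ex k) (op_s e x)) (lin (op_s e) (Ex k.+1 x)).
Proof.
case: x => a w h n Ha; simpl in Ha; subst a. rewrite op_s_nil.
have Htv : tv (St [::] w h n) = actv (ginv h) w by [].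
case: (decP (sg e = w /\ regular w)) => Hc.
  case: Hc => Hs Hr.
  apply: ceq_trans; first exact: lin_single.
  rewrite [Ex k.+1 _]/= decT; last by split => //; rewrite Htv; apply: regular_act.
  apply: ceq_sym; apply: ceq_trans; first exact: lin_flat.
  apply: ceq_trans; first (apply: ceq_flat_in => f Hf; apply: ceq_scalev; exact: ceq_sym (Ex_op_s1 _ _ _)).
  pose f0 := acte (ginv h) e.
  apply: ceq_trans.
    apply: (@ceq_flat_in _ _ (fun f => if dec (f = f0) then
       scalev (cc h f) (Ex k (St [::] (rg (acte h f)) (phi h f) (Z.sub n 1))) else [::])) => f Hf.
    rewrite /xst /= op_s_cons decT; last by apply: (valid_xst (x := St [::] w h n)).
    case: (decP (acte h f = e)) => H1; case: (decP (f = f0)) => H2.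
    - by apply: ceq_scalev; apply: lin_single1.
    - by exfalso; apply: H2; rewrite /f0 -H1 acteV.
    - by exfalso; apply: H1; rewrite H2 /f0 acteV'.
    - by [].
  apply: ceq_trans; first apply: (@flat_single _ (fun f => f = f0) _ f0).
  - exact: fib_nodup.
  - apply: fib_in; first by rewrite Htv; apply: regular_act.
    by rewrite /f0 act_s Hs.
  - by [].
  by rewrite /f0 acteV'.
rewrite lin_nil. case: (decP (regular w)) => Hr; last first.
  rewrite /= decF; last by case=> _; rewrite Htv regular_actE.
  apply: ceq_sym; apply: ceq_trans; first exact: lin_single1.
  by rewrite op_s_nil decF.
rewrite /= decT; last by split => //; rewrite Htv; apply: regular_act.
apply: ceq_sym; apply: ceq_trans; first exact: lin_flat.
apply: flat_nil => f Hf. apply: ceq_trans; first exact: ceq_scalev (ceq_sym (Ex_op_s1 _ _ _)).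
rewrite /xst /= op_s_cons decT; last by apply: (valid_xst (x := St [::] w h n)).
rewrite decF // => H1. apply: Hc; split => //.
by rewrite -H1 act_s (fib_sg Hf) Htv actvV'.
Qed.



Lemma op_e_out e x p : List.In p (op_e e x) -> sa p.2 = e :: sa x.
Proof. by rewrite /op_e; case: decP => // _ [<-|]. Qed.
Lemma op_s_out e x p : List.In p (op_s e x) -> sa p.2 = behead (sa x).
Proof.
rewrite /op_s; case: decP => // _; case: (sa x) => [|f a].
  by case: decP => // _ [<-|].
by case: decP => // _ [<-|].
Qed.
Lemma op_vg_out v g x p : List.In p (op_vg v g x) -> size (sa p.2) = size (sa x).
Proof. by rewrite /op_vg; case: decP => // _ [<-|] //=; rewrite size_gpa. Qed.

Lemma lin_ExD_eq (A : vec) D k : (forall p, List.In p A -> (D - size (sa p.2))%N = k) ->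
  lin (ExD D) A = lin (Ex k) A.
Proof.
elim: A => //= [[r x] A IH] H. rewrite !lin_cons IH; last by move=> p Hp; apply: H; right.
by rewrite /ExD (H (r, x)) //; left.
Qed.

Lemma ExV_op_e e D F : ceq (ExV D.+1 (lin (op_e e) F)) (lin (op_e e) (ExV D F)).
Proof.
rewrite /ExV. apply: ceq_trans; first exact: lin_lin.
apply: ceq_trans; last exact: ceq_sym (lin_lin _ _ _).
apply: lin_ext => x. rewrite (@lin_ExD_eq _ _ (D - size (sa x))%N); first exact: Ex_op_e.
by move=> p /op_e_out -> /=; lia.
Qed.
Lemma ExV_op_vg v g D F : ceq (ExV D (lin (op_vg v g) F)) (lin (op_vg v g) (ExV D F)).
Proof.
rewrite /ExV. apply: ceq_trans; first exact: lin_lin.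
apply: ceq_trans; last exact: ceq_sym (lin_lin _ _ _).
apply: lin_ext => x. rewrite (@lin_ExD_eq _ _ (D - size (sa x))%N); first exact: Ex_op_vg.
by move=> p /op_vg_out ->.
Qed.
Lemma ExV_op_s e D F : ceq (ExV D (lin (op_s e) F)) (lin (op_s e) (ExV D.+1 F)).
Proof.
rewrite /ExV. apply: ceq_trans; first exact: lin_lin.
apply: ceq_trans; last exact: ceq_sym (lin_lin _ _ _).
apply: lin_ext => x. case Hs: (sa x) => [|f a].
  rewrite (@lin_ExD_eq _ _ D); last by move=> p /op_s_out ->; rewrite Hs /= subn0.
  rewrite /ExD Hs subn0. exact: Ex_op_s0.
rewrite (@lin_ExD_eq _ _ (D - size a)%N); last by move=> p /op_s_out ->; rewrite Hs.
rewrite /ExD Hs /= subSS. apply: Ex_op_s1. by rewrite Hs.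
Qed.

Definition preserves (A : st -> vec) := forall F G, approx F G -> approx (lin A F) (lin A G).

Lemma pres_op_e e : preserves (op_e e).
Proof.
move=> F G [D H]; exists D.+1.
apply: ceq_trans; first exact: ExV_op_e.
apply: ceq_trans; last exact: ceq_sym (ExV_op_e _ _ _). exact: ceq_lin.
Qed.
Lemma pres_op_vg v g : preserves (op_vg v g).
Proof.
move=> F G [D H]; exists D.
apply: ceq_trans; first exact: ExV_op_vg.
apply: ceq_trans; last exact: ceq_sym (ExV_op_vg _ _ _ _). exact: ceq_lin.
Qed.
Lemma pres_op_s e : preserves (op_s e).
Proof.
move=> F G [D H]; exists D.
apply: ceq_trans; first exact: ExV_op_s.
apply: ceq_trans; last exact: ceq_sym (ExV_op_s _ _ _). apply: ceq_lin.
exact: (approx_up (leqnSn D) H).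
Qed.

Lemma lin_add A B F : ceq (lin (fun y => A y ++ B y) F) (lin A F ++ lin B F).
Proof.
move=> y; rewrite coef_cat !coef_lin. elim: F => /= [|p F IH]; first by rewrite addr0.
rewrite IH coef_cat. ring.
Qed.
Lemma lin_scalel A r F : ceq (lin (fun y => scalev r (A y)) F) (scalev r (lin A F)).
Proof.
move=> y; rewrite coef_scalev !coef_lin. elim: F => /= [|p F IH]; first by rewrite mulr0.
rewrite IH coef_scalev. ring.
Qed.
Lemma lin_zero F : lin (fun _ => [::]) F = [::].
Proof. by elim: F. Qed.
Lemma lin_equiv A B : (forall x, approx (A x) (B x)) -> forall F, approx (lin A F) (lin B F).
Proof.
move=> H; elim=> [|[r x] F IH]; first exact: approx_refl.
rewrite !lin_cons; apply: approx_cat => //; exact: approx_scalev.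
Qed.


Fixpoint evalG (a : LGX) : st -> vec :=
  match a with
  | fvar (LGe e) => op_e e
  | fvar (LGs e) => op_s e
  | fvar (LGvg v g) => op_vg v g
  | fzero => fun _ => [::]
  | fadd a b => fun x => evalG a x ++ evalG b x
  | fscale r a => fun x => scalev r (evalG a x)
  | fmul a b => fun x => lin (evalG a) (evalG b x)
  end.

Lemma evalG_pres a : preserves (evalG a).
Proof.
elim: a => [[e|e|v g]||a IHa b IHb|r a IH|a IHa b IHb] /=.
- exact: pres_op_e.
- exact: pres_op_s.
- exact: pres_op_vg.
- by move=> F G _; rewrite !lin_zero; apply: approx_refl.
- move=> F G H. apply: (approx_ceq (lin_add _ _ _) (lin_add _ _ _)). apply: approx_cat; auto.
- move=> F G H. apply: (approx_ceq (lin_scalel _ _ _) (lin_scalel _ _ _)). apply: approx_scalev; auto.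
- move=> F G H. apply: (approx_ceq (ceq_sym (lin_lin _ _ _)) (ceq_sym (lin_lin _ _ _))). auto.
Qed.



Lemma st_eta x : St (sa x) (sw x) (sh x) (sn x) = x. Proof. by case: x. Qed.
Lemma op_vg1 v x : op_vg v g1 x = if dec (valid x /\ v = stv x) then [:: (1, x)] else [::].
Proof. by rewrite /op_vg actv1 gpa1 gc1 gphi1 g1mul actv1 st_eta. Qed.
Lemma lin_id_on A F : (forall p, List.In p F -> A p.2 = [:: (1, p.2)]) -> ceq (lin A F) F.
Proof.
elim: F => //= [[r x] F IH] H y. rewrite lin_cons coef_cat IH; last by move=> p Hp; apply: H; right.
by rewrite (H (r, x)) /=; [rewrite mulr1 addr0|left].
Qed.
Lemma op_s_stv e y : stv y <> sg e -> op_s e y = [::].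
Proof.
rewrite /op_s /stv; case: decP => // Hv; case: (sa y) => [|f a] /= H.
  by rewrite decF // => -[H1 _]; apply: H.
by rewrite decF // => E; subst.
Qed.
Lemma op_s_out_valid e x p : List.In p (op_s e x) -> valid p.2 /\ stv p.2 = rg e.
Proof.
rewrite /op_s; case: decP => // Hv; case Hs: (sa x) => [|f a].
  by case: decP => // _ [<-|].
case: decP => // E [<-|] //=; subst f. rewrite /valid Hs in Hv. by case: Hv.
Qed.
Lemma valid_nil w h n : valid (St [::] w h n). Proof. by []. Qed.

Definition rsound (a b : LGX) := forall x, approx (evalG a x) (evalG b x).

Lemma rs_e e : rsound (xe e) (fmul (fmul (xv (sg e)) (xe e)) (xv (rg e))).
Proof.
move=> x; apply: ceq_approx; rewrite /xe /xv /= op_vg1.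
case: decP => H.
  apply: ceq_sym; apply: ceq_trans; first exact: lin_single1.
  rewrite /op_e decT; last by case: H.
  apply: ceq_trans; first exact: lin_single1.
  rewrite op_vg1 decT //. split => //. by case: H => Hv Hr; split.
by rewrite lin_nil /op_e decF.
Qed.

Lemma rs_s e : rsound (xs e) (fmul (fmul (xv (rg e)) (xs e)) (xv (sg e))).
Proof.
move=> x; apply: ceq_approx; rewrite /xs /xv /= op_vg1.
case: decP => H.
  apply: ceq_sym; apply: ceq_trans; first exact: lin_single1.
  apply: lin_id_on => p /op_s_out_valid [H1 H2]. by rewrite op_vg1 decT.
rewrite lin_nil. case: (decP (valid x)) => Hv; last by rewrite /op_s decF.
by rewrite op_s_stv // => E; apply: H.
Qed.

Lemma rs_ee e : rsound (fmul (xs e) (xe e)) (xv (rg e)).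
Proof.
move=> x; apply: ceq_approx; rewrite /xs /xe /xv /= op_vg1 /op_e.
case: decP => H; last by rewrite lin_nil.
apply: ceq_trans; first exact: lin_single1.
rewrite op_s_cons decT; last by case: H => Hv Hr; split.
rewrite decT // Z.add_simpl_r st_eta. by [].
Qed.

Lemma rs_ef e f : e <> f -> rsound (fmul (xs e) (xe f)) fzero.
Proof.
move=> Hef x; apply: ceq_approx; rewrite /xs /xe /= /op_e.
case: decP => H; last by rewrite lin_nil.
apply: ceq_trans; first exact: lin_single1.
rewrite op_s_cons. case: decP => // _. by rewrite decF // => E; apply: Hef.
Qed.

Lemma stv_gpa g x : stv (St (gpa g (sa x)) (actv g (sw x)) (gmul (gphi g (sa x)) (sh x)) (sn x)) = actv g (stv x).
Proof. exact: startv_gpa. Qed.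
Lemma valid_gpa g x : valid x -> valid (St (gpa g (sa x)) (actv g (sw x)) (gmul (gphi g (sa x)) (sh x)) (sn x)).
Proof. exact: vpath_gpa. Qed.

Lemma rs_vgwh v g w h : v = actv g w ->
  rsound (fmul (xvg v g) (xvg w h)) (xvg v (gmul g h)).
Proof.
move=> Hv x; apply: ceq_approx; rewrite /xvg /=.
rewrite {2}/op_vg. case: decP => H; last first.
  rewrite lin_nil /op_vg decF //. case=> H1 H2; apply: H; split => //.
  apply: (@actv_inj g). by rewrite -Hv H2 actvM.
case: H => H1 H2.
apply: ceq_trans; first exact: lin_single.
rewrite /op_vg decT; last by split; [apply: valid_gpa|rewrite stv_gpa -H2].
rewrite decT; last by split => //; rewrite actvM -H2.
move=> y /=. rewrite !addr0 -gpaM -actvM gmulA -gphiM gcM. by case: decP => _; ring.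
Qed.

Lemma rs_vgwh0 v g w h : v <> actv g w ->
  rsound (fmul (xvg v g) (xvg w h)) fzero.
Proof.
move=> Hv x; apply: ceq_approx; rewrite /xvg /=.
rewrite {2}/op_vg. case: decP => H; last by rewrite lin_nil.
case: H => H1 H2.
apply: ceq_trans; first exact: lin_single.
rewrite /op_vg decF // => -[_ H3]. apply: Hv. by rewrite H3 stv_gpa -H2.
Qed.

Lemma rs_vge v g e : v = actv g (sg e) ->
  rsound (fmul (xvg v g) (xe e))
         (fscale (cc g e) (fmul (xe (acte g e)) (xvg (rg (acte g e)) (phi g e)))).
Proof.
move=> Hv x; apply: ceq_approx; rewrite /xvg /xe /=.
rewrite {1}/op_e. case: decP => H; last first.
  rewrite lin_nil {1}/op_vg decF ?lin_nil //.
  case=> H1 H2; apply: H; split => //. apply: (@actv_inj g).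
  by rewrite -act_r H2 /stv phi_vert.
case: H => H1 H2.
apply: ceq_trans; first exact: lin_single1.
rewrite /op_vg decT; last by split; [split|rewrite /stv /= Hv].
rewrite decT; last by split => //; rewrite act_r H2 phi_vert.
move=> y. rewrite coef_scalev lin_single coef_scalev /op_e decT; last first.
  split; first exact: vpath_gpa.
  by rewrite /stv /= startv_gpa act_r H2 phi_vert.
by rewrite /= !addr0 phi_vert; case: decP => _; ring.
Qed.

Lemma rs_vge0 v g e : v <> actv g (sg e) -> rsound (fmul (xvg v g) (xe e)) fzero.
Proof.
move=> Hv x; apply: ceq_approx; rewrite /xvg /xe /=.
rewrite {1}/op_e. case: decP => H; last by rewrite lin_nil.
apply: ceq_trans; first exact: lin_single1.
by rewrite /op_vg decF // => -[_ E]; apply: Hv.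
Qed.

Lemma rs_svg e v g : v = sg e ->
  rsound (fmul (xs e) (xvg v g))
     (fscale (cc g (acte (ginv g) e))
        (fmul (xvg (rg e) (phi g (acte (ginv g) e))) (xs (acte (ginv g) e)))).
Proof.
move=> Hv x; apply: ceq_approx; rewrite /xvg /xs /=.
set f := acte (ginv g) e.
have Hgf : acte g f = e by rewrite /f acteV'.
case: (decP (valid x)) => Hx; last first.
  by rewrite /op_vg decF ?lin_nil /op_s ?decF ?lin_nil // => -[].
case: x Hx => [[|f1 a] w h n] Hx.
-
  rewrite op_s_nil {1}/op_vg /=.
  have Hc : (v = actv g w /\ (sg e = actv g w /\ regular (actv g w))) <-> (sg f = w /\ regular w).
    rewrite /f act_s regular_actE Hv; split.
      by case=> _ [-> Hr]; rewrite actvV.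
    by case=> <- Hr; rewrite actvV'.
  case: (decP (sg f = w /\ regular w)) => H; last first.
    rewrite lin_nil. case: decP => H1; last by rewrite lin_nil.
    apply: ceq_trans; first exact: lin_single1.
    rewrite /= op_s_nil decF //. case: H1 => _ H1 H2; apply: H; apply/Hc; split => //.
  case: H => Hs Hr. rewrite decT; last by split => //; rewrite /stv /= Hv -Hs /f act_s actvV'.
  apply: ceq_trans; first exact: lin_single1.
  rewrite /= op_s_nil decT; last by split; [rewrite -Hs /f act_s actvV'|apply: regular_act].
  move=> y. rewrite coef_scalev lin_single coef_scalev /op_vg decT; last first.
    by split => //; rewrite /stv /= phi_vert -act_r Hgf.
  have E1 : acte (ginv (gmul g h)) e = acte (ginv h) f by rewrite ginvM acteM.
  have E2 : acte h (acte (ginv h) f) = f by rewrite acteV'.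
  rewrite E1 phi_cocycle cc_cocycle E2 /= phi_vert -act_r Hgf !addr0.
  by case: decP => _; ring.
-
  rewrite op_s_cons decT // {1}/op_vg.
  case: (decP (f1 = f)) => H; last first.
    rewrite lin_nil. case: decP => H1; last by rewrite lin_nil.
    apply: ceq_trans; first exact: lin_single.
    rewrite /= op_s_cons decT; last by apply: (valid_gpa g (x := St (f1 :: a) w h n)); case: H1.
    rewrite decF; last by move=> E; apply: H; rewrite /f -E acteV.
    by move=> y; rewrite !coef_scalev /= !mulr0.
  subst f1. rewrite decT; last by split => //; rewrite /stv /= Hv -Hgf act_s.
  apply: ceq_trans; first exact: lin_single.
  rewrite /= op_s_cons decT; last by apply: (valid_gpa g (x := St (f :: a) w h n)).
  rewrite decT //.
  move=> y. rewrite !coef_scalev lin_single1 /op_vg decT; last first.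
    case: Hx => Hx1 Hx2. split => //. by rewrite /stv /= -Hx1 phi_vert -act_r Hgf.
  by rewrite /= !addr0 phi_vert; case: decP => _; ring.
Qed.

Lemma rs_svg0 e v g : v <> sg e -> rsound (fmul (xs e) (xvg v g)) fzero.
Proof.
move=> Hv x; apply: ceq_approx; rewrite /xvg /xs /=.
rewrite {1}/op_vg. case: decP => H; last by rewrite lin_nil.
apply: ceq_trans; first exact: lin_single.
rewrite op_s_stv; first by move=> y; rewrite coef_scalev /= mulr0.
case: H => _ H. by rewrite stv_gpa -H.
Qed.

Lemma perm_flat (L1 L2 : seq Ed) (X : Ed -> vec) : Permutation L1 L2 ->
  ceq (flatten (map X L1)) (flatten (map X L2)).
Proof.
elim=> //=.
- by move=> f L L' _ H; apply: ceq_cat.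
- by move=> f f' L y; rewrite !coef_cat; ring.
- by move=> L L' L'' _ H1 _ H2; apply: ceq_trans H2.
Qed.

Lemma flat_comp (L : seq Ed) (X : Ed -> vec) (k : Ed -> Ed) :
  ceq (flatten (map (fun f => X (k f)) L)) (flatten (map X (map k L))).
Proof. by rewrite -map_comp. Qed.

Lemma evalG_fsum (ls : seq Ed) (F : Ed -> LGX) x :
  evalG (fsum ls F) x = flatten (map (fun e => evalG (F e) x) ls).
Proof. by elim: ls => //= e ls ->. Qed.

Lemma rs_CK2 v ls : enumerates_fiber v ls ->
  rsound (xv v) (fsum ls (fun e => fmul (xe e) (xs e))).
Proof.
move=> Hls x. have [Hne [Hnd Hin]] := Hls.
rewrite evalG_fsum /xv /xe /xs /= op_vg1.
case: (decP (valid x)) => Hx; last first.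
  rewrite decF; last by case.
  apply: ceq_approx; apply: ceq_sym; apply: flat_nil => e _.
  by rewrite /op_s decF.
case: x Hx => [[|f a] w h n] Hx.
- case: (decP (v = w)) => Hvw; last first.
    rewrite decF; last by case.
    apply: ceq_approx; apply: ceq_sym; apply: flat_nil => e /Hin He.
    by rewrite op_s_nil decF // => -[H _]; apply: Hvw; rewrite -He H.
  subst w. rewrite decT //.
  have Hreg : regular v by exists ls.
  pose c := fun e => cc h (acte (ginv h) e).
  pose B := fun e => [:: ((1 : l), St [:: e] (rg e) (phi h (acte (ginv h) e)) n)].
  have R : ceq (flatten (map (fun e => lin (op_e e) (op_s e (St [::] v h n))) ls))
               (flatten (map (fun e => scalev (c e) (B e)) ls)).
    apply: ceq_flat_in => e He. rewrite op_s_nil decT; last by split => //; apply/Hin.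
    apply: ceq_trans; first exact: lin_single.
    by rewrite /op_e decT //= Z.sub_add.
  apply: approx_trans; last exact: ceq_approx (ceq_sym R).
  exists 1%N.
  apply: ceq_trans; first exact: lin_single1.
  rewrite /ExD /= decT; last first.
    by split => //; rewrite /tv /=; apply: regular_act.
  apply: ceq_trans.
    apply: (@ceq_flat _ _ (fun f => scalev (c (acte h f)) (B (acte h f)))) => f.
    by rewrite /c /B acteV /xst /=.
  apply: ceq_trans; first exact: (flat_comp _ (fun e => scalev (c e) (B e)) (acte h)).
  apply: ceq_trans.
    apply: (@perm_flat _ ls). apply: NoDup_Permutation => //.
      apply: nodup_map_inj; [exact: acte_inj|exact: fib_nodup].
    move=> e; rewrite Hin; split.
      case/List.in_map_iff => f [<- Hf]. by rewrite act_s (fib_sg Hf) /tv /= actvV'.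
    move=> He. apply/List.in_map_iff. exists (acte (ginv h) e); split; first exact: acteV'.
    apply: fib_in; first by rewrite /tv /=; apply: regular_act.
    by rewrite act_s He.
  apply: ceq_sym. rewrite /ExV (@lin_ExD_eq _ _ 0%N); first exact: lin_Ex0.
  move=> p; clear R Hls Hne Hnd Hin; elim: ls => //= e L IH Hp.
  case: Hp => [<-|H] //. by apply: IH.
- apply: ceq_approx. have Hv1 : vpath a w /\ rg f = startv a w by case: Hx.
  case: (decP (sg f = v)) => Hf; last first.
    rewrite decF; last by case=> _ E; apply: Hf; rewrite E.
    apply: ceq_sym; apply: flat_nil => e /Hin He.
    rewrite op_s_cons decT // decF ?lin_nil // => E; apply: Hf; by rewrite E.
  rewrite decT; last by split.
  apply: ceq_sym. apply: ceq_trans.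
    apply: (@ceq_flat_in _ _ (fun e => if dec (e = f) then [:: (1, St (f :: a) w h n)] else [::])) => e He.
    rewrite op_s_cons decT //. case: (decP (f = e)) => E1.
      subst e. rewrite decT //. apply: ceq_trans; first exact: lin_single1.
      rewrite /op_e decT /=; last by case: Hv1.
      by rewrite Z.sub_add.
    by rewrite decF // => E; apply: E1.
  apply: (@flat_single _ (fun e => e = f) _ f) => //. by apply/Hin.
Qed.



Lemma rel_sound (a b : LGX) : LG_rel a b -> rsound a b.
Proof.
case.
- exact: rs_e.
- exact: rs_s.
- exact: rs_ee.
- exact: rs_ef.
- exact: rs_vgwh.
- exact: rs_vgwh0.
- exact: rs_vge.
- exact: rs_vge0.
- exact: rs_svg.
- exact: rs_svg0.
- exact: rs_CK2.
Qed.

Lemma evalG_sound (a b : LGX) : fcong (@LG_rel l T) a b -> rsound a b.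
Proof.
elim=> {a b}.
- exact: rel_sound.
- by move=> a x; apply: approx_refl.
- by move=> a b _ H x; apply: approx_sym.
- by move=> a b c _ H1 _ H2 x; apply: approx_trans (H1 x) (H2 x).
- by move=> a a' b b' _ H1 _ H2 x /=; apply: approx_cat.
- by move=> r a a' _ H x /=; apply: approx_scalev.
- move=> a a' b b' _ H1 _ H2 x /=. apply: approx_trans; first exact: evalG_pres (H2 x).
  exact: lin_equiv.
- by move=> a b c x /=; rewrite catA; apply: approx_refl.
- move=> a b x /=; apply: ceq_approx => y; rewrite !coef_cat; ring.
- by move=> a x; apply: approx_refl.
- move=> a x /=; apply: ceq_approx => y; rewrite coef_cat coef_scalev /=. ring.
- move=> a x /=; apply: ceq_approx => y; rewrite coef_scalev. ring.
- move=> r s a x /=; apply: ceq_approx => y; rewrite !coef_scalev. ring.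
- move=> r a b x /=; apply: ceq_approx => y; rewrite !coef_scalev !coef_cat !coef_scalev. ring.
- move=> r s a x /=; apply: ceq_approx => y; rewrite !coef_cat !coef_scalev. ring.
- move=> a b c x /=; apply: ceq_approx. exact: lin_lin.
- move=> a b c x /=; apply: ceq_approx. exact: lin_add.
- move=> a b c x /=; rewrite lin_cat; apply: approx_refl.
- move=> r a b x /=; apply: ceq_approx. exact: lin_scalel.
- move=> r a b x /=; apply: ceq_approx. exact: lin_scalev.
Qed.




Lemma G_vv v : fmul (xv v) (xv v) ~G xv v.
Proof.
apply: fc_trans; first by apply: fc_rel; apply: (@LGr_vgwh l T v g1 v g1); rewrite actv1.
by rewrite g1mul.
Qed.
Lemma G_er e : fmul (xe e) (xv (rg e)) ~G xe e.
Proof.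
have H := fc_rel (LGr_e (T := T) e).
by rewrite {1}H -fc_mulA G_vv -H.
Qed.
Lemma G_rs e : fmul (xv (rg e)) (xs e) ~G xs e.
Proof.
have H := fc_rel (LGr_s (T := T) e).
by rewrite {1}H !fc_mulA G_vv -H.
Qed.
Lemma G_ss e : fmul (xs e) (xv (sg e)) ~G xs e.
Proof.
have H := fc_rel (LGr_s (T := T) e).
by rewrite {1}H -fc_mulA G_vv -H.
Qed.
Lemma G_se e : fmul (xv (sg e)) (xe e) ~G xe e.
Proof.
apply: fc_trans; first by apply: fc_rel; apply: (@LGr_vge l T (sg e) g1 e); rewrite actv1.
by rewrite cc1 acte1 phi1 fc_scale1 G_er.
Qed.

Lemma canon_fsum (ls : seq Ed) (F : Ed -> LEX) :
  canon (fsum ls F) = fsum ls (fun e => canon (F e)).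
Proof. by elim: ls => //= e ls <-. Qed.

Lemma canon_rel (a b : LEX) : LE_rel a b -> canon a ~G canon b.
Proof.
case=> /=.
- move=> v; exact: G_vv.
- move=> v w Hvw. apply: fc_rel. apply: LGr_vgwh0. by rewrite actv1.
- move=> e; exact: G_se.
- move=> e; exact: G_er.
- move=> e; exact: G_rs.
- move=> e; exact: G_ss.
- move=> e; apply: fc_rel; exact: LGr_ee.
- move=> e f Hef; apply: fc_rel; exact: LGr_ef.
- move=> v ls H. rewrite canon_fsum. apply: fc_rel. exact: LGr_CK2.
Qed.

Lemma canon_cong (a b : LEX) : a ~E b -> canon a ~G canon b.
Proof.
elim=> {a b} /=.
- exact: canon_rel.
- by [].
- by move=> a b _ H; apply: fc_sym.
- by move=> a b c _ H1 _ H2; apply: fc_trans H1 H2.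
- by move=> a a' b b' _ H1 _ H2; apply: fc_add.
- by move=> r a a' _ H; apply: fc_scale.
- by move=> a a' b b' _ H1 _ H2; apply: fc_mul.
all: by move=> *; constructor.
Qed.

Lemma E_rel a b : LE_rel a b -> a ~E b. Proof. exact: fc_rel. Qed.
Lemma E_vv v : fmul (vv v) (vv v) ~E vv v. Proof. apply: E_rel; constructor. Qed.
Lemma E_vw v w : v <> w -> fmul (vv v) (vv w) ~E fzero. Proof. by move=> H; apply: E_rel; constructor. Qed.
Lemma E_se e : fmul (vv (sg e)) (ve e) ~E ve e. Proof. apply: E_rel; constructor. Qed.
Lemma E_er e : fmul (ve e) (vv (rg e)) ~E ve e. Proof. apply: E_rel; constructor. Qed.
Lemma E_rs e : fmul (vv (rg e)) (vs e) ~E vs e. Proof. apply: E_rel; constructor. Qed.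
Lemma E_ss e : fmul (vs e) (vv (sg e)) ~E vs e. Proof. apply: E_rel; constructor. Qed.
Lemma E_ee e : fmul (vs e) (ve e) ~E vv (rg e). Proof. apply: E_rel; constructor. Qed.
Lemma E_ef e f : e <> f -> fmul (vs e) (ve f) ~E fzero. Proof. by move=> H; apply: E_rel; constructor. Qed.

Lemma E_ve_ne v e : v <> sg e -> fmul (vv v) (ve e) ~E fzero.
Proof. move=> H. by rewrite -E_se fc_mulA E_vw // fmul0l. Qed.
Lemma E_ev_ne e w : rg e <> w -> fmul (ve e) (vv w) ~E fzero.
Proof. move=> H. by rewrite -E_er -fc_mulA E_vw // fmul0r. Qed.
Lemma E_sv_ne e w : sg e <> w -> fmul (vs e) (vv w) ~E fzero.
Proof. move=> H. by rewrite -E_ss -fc_mulA E_vw // fmul0r. Qed.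
Lemma E_vs_ne v e : v <> rg e -> fmul (vv v) (vs e) ~E fzero.
Proof. move=> H. by rewrite -E_rs fc_mulA E_vw // fmul0l. Qed.
Lemma E_fe_ne e f : e <> f -> fmul (vs e) (ve f) ~E fzero. Proof. exact: E_ef. Qed.

Fixpoint gexp (x : LE_gen E) (gs : seq Ed) : LEX :=
  if gs is g :: gs' then fmul (fvar x) (gexp (LEs g) gs') else fvar x.
Record mono := Mo { ma : seq Ed; mw : V; mg : seq Ed }.
Fixpoint mexp0 (a : seq Ed) (w : V) (gs : seq Ed) : LEX :=
  if a is e :: a' then fmul (ve e) (mexp0 a' w gs) else gexp (LEv w) gs.
Definition mexp (m : mono) : LEX := mexp0 (ma m) (mw m) (mg m).
Definition mstart (m : mono) : V := startv (ma m) (mw m).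

Definition lcm := seq (l * mono).
Definition lcs (L : lcm) : LEX := foldr (fun p acc => fadd (fscale p.1 (mexp p.2)) acc) fzero L.

Lemma lcs_cat L1 L2 : lcs (L1 ++ L2) ~E fadd (lcs L1) (lcs L2).
Proof. elim: L1 => /= [|p L IH]; first by rewrite fc_add0. by rewrite IH fc_addA. Qed.

Lemma scale_if (c : bool) r (m : LEX) (a : LEX) :
  a ~E (if c then m else fzero) -> fscale r a ~E fscale (if c then r else 0) m.
Proof. case: c => H; rewrite H //. by rewrite fscale_zero fscale0. Qed.

Lemma L_v v m : fmul (vv v) (mexp m) ~E (if dec (v = mstart m) then mexp m else fzero).
Proof.
case: m => [[|e a] w gs]; rewrite /mexp /mstart /=.
  case: gs => [|g gs] /=.
    case: decP => H; first by rewrite H E_vv.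
    exact: E_vw.
  case: decP => H; first by rewrite fc_mulA H E_vv.
  by rewrite fc_mulA E_vw // fmul0l.
case: decP => H; first by rewrite fc_mulA H E_se.
by rewrite fc_mulA E_ve_ne // fmul0l.
Qed.

Lemma L_e e m : fmul (ve e) (mexp m) ~E
  (if dec (rg e = mstart m) then mexp (Mo (e :: ma m) (mw m) (mg m)) else fzero).
Proof.
rewrite -E_er -fc_mulA L_v. case: decP => H //. by rewrite fmul0r.
Qed.

Lemma gexp_s g gs : gexp (LEs g) gs ~E fmul (vs g) (gexp (LEv (sg g)) gs).
Proof.
case: gs => [|g' gs] /=; first by rewrite E_ss.
by rewrite fc_mulA E_ss.
Qed.

Lemma L_s e m : fmul (vs e) (mexp m) ~E
  match ma m with
  | f :: a => if dec (f = e /\ rg e = startv a (mw m)) then mexp (Mo a (mw m) (mg m)) else fzero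
  | [::] => if dec (sg e = mw m) then mexp (Mo [::] (rg e) (e :: mg m)) else fzero
  end.
Proof.
case: m => [[|f a] w gs]; rewrite /mexp /=.
  case: decP => H.
    subst w. rewrite -gexp_s /=. case: gs => [|g gs] /=; first by rewrite E_rs.
    by rewrite fc_mulA E_rs.
  case: gs => [|g gs] /=; first exact: E_sv_ne.
  by rewrite fc_mulA E_sv_ne // fmul0l.
rewrite fc_mulA. case: (decP (f = e)) => Hf; last first.
  rewrite decF; last by case.
  rewrite E_fe_ne ?fmul0l //. by move=> E'; apply: Hf.
subst f. rewrite E_ee.
have := L_v (rg e) (Mo a w gs). rewrite /mexp /mstart /= => ->.
case: decP => H1; case: decP => H2 //.
- by exfalso; apply: H2.
- by exfalso; apply: H1; case: H2.
Qed.

Definition vL v (L : lcm) : lcm :=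
  map (fun p => (if dec (v = mstart p.2) then p.1 else 0, p.2)) L.
Definition eL e (L : lcm) : lcm :=
  map (fun p => (if dec (rg e = mstart p.2) then p.1 else 0, Mo (e :: ma p.2) (mw p.2) (mg p.2))) L.
Definition sL e (L : lcm) : lcm :=
  map (fun p => match ma p.2 with
                | f :: a => (if dec (f = e /\ rg e = startv a (mw p.2)) then p.1 else 0, Mo a (mw p.2) (mg p.2))
                | [::] => (if dec (sg e = mw p.2) then p.1 else 0, Mo [::] (rg e) (e :: mg p.2))
                end) L.

Lemma mul_lcs_gen (x : LEX) (F : l * mono -> l * mono) L :
  (forall p, fmul x (fscale p.1 (mexp p.2)) ~E fscale (F p).1 (mexp (F p).2)) ->
  fmul x (lcs L) ~E lcs (map F L).
Proof.
move=> H; elim: L => /= [|p L IH]; first exact: fmul0r.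
by rewrite fc_mulDr IH H.
Qed.

Lemma LL_v v L : fmul (vv v) (lcs L) ~E lcs (vL v L).
Proof.
apply: mul_lcs_gen => p /=. rewrite fc_scaler. apply: scale_if. exact: L_v.
Qed.
Lemma LL_e e L : fmul (ve e) (lcs L) ~E lcs (eL e L).
Proof.
apply: mul_lcs_gen => p /=. rewrite fc_scaler. apply: scale_if. exact: L_e.
Qed.
Lemma LL_s e L : fmul (vs e) (lcs L) ~E lcs (sL e L).
Proof.
apply: mul_lcs_gen => p /=. rewrite fc_scaler.
have := L_s e p.2. case: (ma p.2) => [|f a] H; apply: scale_if; exact: H.
Qed.

Lemma LL_gen (x : LE_gen E) L : exists L', fmul (fvar x) (lcs L) ~E lcs L'.
Proof.
case: x => [v|e|e]; [exists (vL v L); exact: LL_v|exists (eL e L); exact: LL_e|exists (sL e L); exact: LL_s].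
Qed.
Lemma LL_gexp x gs L : exists L', fmul (gexp x gs) (lcs L) ~E lcs L'.
Proof.
elim: gs x L => /= [|g gs IH] x L; first exact: LL_gen.
have [L1 H1] := IH (LEs g) L. have [L2 H2] := LL_gen x L1.
exists L2. by rewrite -fc_mulA H1 H2.
Qed.
Lemma LL_mono m L : exists L', fmul (mexp m) (lcs L) ~E lcs L'.
Proof.
case: m => a w gs; rewrite /mexp /=. elim: a L => /= [|e a IH] L; first exact: LL_gexp.
have [L1 H1] := IH L. exists (eL e L1). by rewrite -fc_mulA H1 LL_e.
Qed.
Definition scL r (L : lcm) : lcm := map (fun p => (r * p.1, p.2)) L.
Lemma lcs_scale r L : fscale r (lcs L) ~E lcs (scL r L).
Proof.
elim: L => /= [|p L IH]; first exact: fscale_zero.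
by rewrite fc_scaleDr IH fc_scaleA.
Qed.
Lemma LL_mul L1 L2 : exists L, fmul (lcs L1) (lcs L2) ~E lcs L.
Proof.
elim: L1 => /= [|p L1 [L IH]]; first by exists [::]; exact: fmul0l.
have [L' H'] := LL_mono p.2 L2.
exists (scL p.1 L' ++ L). by rewrite lcs_cat fc_mulDl IH fc_scalel H' lcs_scale.
Qed.

Lemma nf (a : LEX) : exists L, a ~E lcs L.
Proof.
elim: a => [x||a [La Ha] b [Lb Hb]|r a [La Ha]|a [La Ha] b [Lb Hb]].
- case: x => [v|e|e].
  + exists [:: (1, Mo [::] v [::])]. by rewrite /= /mexp /= fc_scale1 fadd0r.
  + exists [:: (1, Mo [:: e] (rg e) [::])]. by rewrite /= /mexp /= fc_scale1 fadd0r E_er.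
  + exists [:: (1, Mo [::] (rg e) [:: e])]. by rewrite /= /mexp /= fc_scale1 fadd0r E_rs.
- by exists [::].
- exists (La ++ Lb). by rewrite lcs_cat Ha Hb.
- exists (scL r La). by rewrite Ha lcs_scale.
- have [L HL] := LL_mul La Lb. exists L. by rewrite Ha Hb HL.
Qed.


Definition Zr (a : LEX) := forall x, approx (evalG (canon a) x) [::].

Lemma Zr_cong a b : a ~E b -> Zr a -> Zr b.
Proof.
move=> H Ha x. apply: approx_trans (Ha x).
exact: evalG_sound (canon_cong (fc_sym H)) x.
Qed.
Lemma Zr_mul a b : Zr b -> Zr (fmul a b).
Proof.
move=> Hb x. have := evalG_pres (canon a) (Hb x). by rewrite lin_nil.
Qed.
Lemma Zr_add a b : Zr a -> Zr b -> Zr (fadd a b).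
Proof. move=> Ha Hb x. exact: (approx_cat (Ha x) (Hb x)). Qed.
Lemma Zr_scale r a : Zr a -> Zr (fscale r a).
Proof. move=> Ha x. exact: (approx_scalev r (Ha x)). Qed.

Lemma in_lin A F p : List.In p (lin A F) ->
  exists q p', List.In q F /\ List.In p' (A q.2) /\ p = (q.1 * p'.1, p'.2).
Proof.
elim: F => //= [[r x] F IH]. rewrite lin_cons => Hp. case: (List.in_app_or _ _ _ Hp) => H.
  case: (proj1 (List.in_map_iff _ _ _) H) => p' [<- Hp']. by exists (r, x), p'; split; [left|].
case: (IH H) => q' [p' [H1 [H2 H3]]]. by exists q', p'; split; [right|].
Qed.

Definition allsn (F : vec) (s : Z) := forall p, List.In p F -> sn p.2 = s.
Lemma allsn_lin A F s s' : allsn F s -> (forall y, sn y = s -> allsn (A y) s') -> allsn (lin A F) s'.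
Proof.
move=> H1 H2 p /in_lin [q [p' [Hq [Hp' ->]]]] /=. exact: H2 (H1 _ Hq) _ Hp'.
Qed.
Lemma allsn_op_s e y : allsn (op_s e y) (Z.sub (sn y) 1).
Proof.
rewrite /op_s => p. case: decP => // _. case: (sa y) => [|f a].
  by case: decP => // _ [<-|].
by case: decP => // _ [<-|].
Qed.
Lemma allsn_op_vg v g y : allsn (op_vg v g y) (sn y).
Proof. by rewrite /op_vg => p; case: decP => // _ [<-|]. Qed.

Lemma gexp_sn_s gs : forall g y, allsn (evalG (canon (gexp (LEs g) gs)) y)
   (Z.sub (sn y) (Z.of_nat (size gs).+1)).
Proof.
elim: gs => /= [|g' gs IH] g y.
  by move=> p /allsn_op_s ->.
apply: allsn_lin; first exact: IH.
move=> z Hz p /allsn_op_s ->. rewrite Hz. lia.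
Qed.
Lemma gexp_sn_v gs w y : allsn (evalG (canon (gexp (LEv w) gs)) y)
   (Z.sub (sn y) (Z.of_nat (size gs))).
Proof.
case: gs => /= [|g gs].
  move=> p /allsn_op_vg ->. lia.
apply: allsn_lin; first exact: gexp_sn_s.
move=> z Hz p /allsn_op_vg ->. rewrite Hz. lia.
Qed.

Lemma vpath_suffix a b w : vpath (a ++ b) w -> vpath b w.
Proof. elim: a => //= e a IH [_ H]. exact: IH. Qed.

Lemma strip gs : forall g p w0 h n, vpath p w0 -> (size gs < size p)%N ->
  ceq (evalG (canon (gexp (LEs g) gs)) (St p w0 h n))
      (if dec (exists rest, p = rev (g :: gs) ++ rest)
       then [:: (1, St (drop (size gs).+1 p) w0 h (Z.sub n (Z.of_nat (size gs).+1)))] else [::]).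
Proof.
elim: gs => [|g' gs IH] g p w0 h n Hv Hs.
  case: p Hv Hs => // f p Hv _. rewrite /= op_s_cons decT //.
  case: (decP (f = g)) => H.
    subst f. rewrite decT; last by exists p. by rewrite drop0.
  rewrite decF // => -[r [E _]]. by apply: H.
rewrite [evalG _ _]/=. apply: ceq_trans; first apply: ceq_lin; first apply: IH => //.
  by apply: ltn_trans Hs.
case: decP => H1; last first.
  rewrite lin_nil decF // => -[r Hr]. apply: H1. exists (g :: r).
  by rewrite Hr (rev_cons g (g' :: gs)) cat_rcons.
case: H1 => rest Hr.
have Hdr : drop (size gs).+1 p = rest by rewrite Hr drop_size_cat // size_rev.
rewrite Hdr.
have Hsz : size p = ((size gs).+1 + size rest)%N by rewrite Hr size_cat size_rev.
case: rest Hr Hdr Hsz => [|f rest'] Hr Hdr Hsz; first by move: Hs; rewrite Hsz /=; lia.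
apply: ceq_trans; first exact: lin_single1.
have Hvr : vpath (f :: rest') w0 by rewrite Hr in Hv; apply: vpath_suffix Hv.
rewrite op_s_cons decT //.
case: (decP (f = g)) => H.
  subst f. rewrite decT; last by exists rest'; rewrite Hr (rev_cons g (g' :: gs)) cat_rcons.
  have -> : drop (size gs).+2 p = rest'.
    rewrite Hr. rewrite (_ : (size gs).+2 = size (rev (g' :: gs) ++ [:: g])); last by rewrite size_cat size_rev /=; lia.
    by rewrite -(cat1s g rest') catA drop_size_cat.
  have -> : Z.sub (Z.sub n (Z.of_nat (size gs).+1)) 1 = Z.sub n (Z.of_nat (size (g' :: gs)).+1) by rewrite /=; lia.
  by [].
rewrite decF // => -[r Hr']. apply: H.
move: Hr'; rewrite Hr (rev_cons g (g' :: gs)) cat_rcons => E.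
have := f_equal (drop (size (rev (g' :: gs)))) E. rewrite !drop_size_cat //. by case.
Qed.


Fixpoint gval (w : V) (gs : seq Ed) : Prop :=
  if gs is g :: gs' then rg g = w /\ gval (sg g) gs' else True.
Lemma gval_vpath w gs : gval w gs -> vpath (rev gs) w.
Proof.
elim: gs w => //= g gs IH w [Hg H]. rewrite rev_cons -cats1 -Hg.
by apply: vpath_app => //; apply: IH.
Qed.
Lemma gval_zero w gs : ~ gval w gs -> gexp (LEv w) gs ~E fzero.
Proof.
elim: gs w => [|g gs IH] w /= H; first by exfalso; apply: H.
rewrite gexp_s. case: (decP (rg g = w)) => Hg.
  rewrite IH ?fmul0r //. by move=> H'; apply: H.
by rewrite fc_mulA E_vs_ne ?fmul0l // => E'; apply: Hg.
Qed.

Lemma coef_notin F z : (forall p, List.In p F -> p.2 <> z) -> coef F z = 0.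
Proof.
elim: F => //= p F IH H. rewrite decF; first by rewrite add0r IH // => q Hq; apply: H; right.
by apply: H; left.
Qed.
Lemma coef_flat (L : seq Ed) (X : Ed -> vec) z :
  coef (flatten (map X L)) z = foldr (fun f acc => coef (X f) z + acc) 0 L.
Proof. by elim: L => //= f L IH; rewrite coef_cat IH. Qed.
Lemma esum_single (L : seq Ed) (t : Ed -> l) f0 : List.NoDup L -> List.In f0 L ->
  (forall f, List.In f L -> f <> f0 -> t f = 0) -> foldr (fun f acc => t f + acc) 0 L = t f0.
Proof.
elim: L => //= f L IH Hn Hin H. inversion Hn; subst.
case: Hin => [E|Hin].
  subst f. have -> : foldr (fun f acc => t f + acc) 0 L = 0; last by rewrite addr0.
  clear IH Hn H3. elim: L H2 H => //= g L IH Hg H. rewrite H; last 2 first.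
  - by right; left.
  - by move=> E; apply: Hg; left.
  rewrite add0r IH //; first by move=> Hg'; apply: Hg; right.
  move=> f Hf; apply: H. case: Hf => [->|Hf]; [by left|by right; right].
rewrite H; last 2 first.
- by left.
- by move=> E; subst.
rewrite add0r IH //. by move=> g Hg; apply: H; right.
Qed.

Lemma Ex_unit k Y : valid Y -> exists z, [/\ sn z = sn Y, (exists b, sa z = sa Y ++ b) &
   exists u, coef (Ex k Y) z * u = 1].
Proof.
elim: k Y => [|k IH] Y Hv.
  exists Y; split => //; first by exists [::]; rewrite cats0.
  by exists 1; rewrite /= decT // addr0 mulr1.
rewrite /=. case: decP => Hx; last first.
  exists Y; split => //; first by exists [::]; rewrite cats0.
  by exists 1; rewrite /= decT // addr0 mulr1.
have [Hne [Hnd Hin]] := fib_enum (proj2 Hx).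
case Hf: (fib (tv Y)) Hne => [//|f0 L] _.
have Hf0 : List.In f0 (fib (tv Y)) by rewrite Hf; left.
have [z [Hz1 [b Hb] [u Hu]]] := IH (xst Y f0) (valid_xst Hv Hf0).
have [u0 Hu0] := cc_unit (sh Y) f0.
exists z; split => //; first by exists (acte (sh Y) f0 :: b); rewrite Hb /xst /= -catA.
exists (u0 * u). rewrite -Hf coef_flat.
rewrite (@esum_single _ _ f0) //.
  rewrite coef_scalev. transitivity ((cc (sh Y) f0 * u0) * (coef (Ex k (xst Y f0)) z * u)); first by ring.
  by rewrite Hu0 Hu mulr1.
move=> f Hfin Hne. rewrite coef_scalev coef_notin ?mulr0 //.
move=> p /Ex_shape [_ _ [b' Hb'] _ _] E. apply: Hne.
move: Hb' Hb; rewrite E /xst /= => -> E2.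
have := f_equal (drop (size (sa Y))) E2. rewrite -!catA !drop_size_cat //. case=> /acte_inj //.
Qed.

Lemma coef_ExV_sn D F s z : allsn F s -> sn z <> s -> coef (ExV D F) z = 0.
Proof.
move=> H Hz. rewrite /ExV coef_lin. elim: F H => //= p F IH H.
rewrite IH; last by move=> q Hq; apply: H; right.
rewrite coef_notin ?mulr0 ?addr0 // => q /Ex_shape [Hq _ _ _ _] E. apply: Hz.
by rewrite -E Hq; apply: H; left.
Qed.

Definition coefM (L : lcm) (m : mono) : l :=
  foldr (fun p acc => (if dec (p.2 = m) then p.1 else 0) + acc) 0 L.

Section Base.
Variables (w : V) (gs : seq Ed).
Hypothesis Hg : gval w gs.
Let X := St (rev gs) w g1 Z0.
Let Y0 := St [::] w g1 (Z.sub Z0 (Z.of_nat (size gs))).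

Lemma ev_eq w' gs' : size gs' = size gs ->
  ceq (evalG (canon (gexp (LEv w') gs')) X)
      (if dec (w' = w /\ gs' = gs) then [:: (1, Y0)] else [::]).
Proof.
case: gs' => [|g gs'] Hs.
  have Hgs : gs = [::] by case: gs Hg Hs.
  rewrite /X /Y0 Hgs /= op_vg1 /stv /=.
  case: decP => H1; case: decP => H2 //.
  - by exfalso; apply: H2; case: H1.
  - by exfalso; apply: H1; case: H2.
rewrite [evalG _ _]/=. apply: ceq_trans; first apply: ceq_lin; first apply: strip.
- exact: gval_vpath.
- by rewrite size_rev -Hs.
case: decP => H1.
  case: H1 => rest Hr.
  have Hrest : rest = [::].
    have := f_equal size Hr. rewrite size_cat !size_rev -Hs. by case: rest {Hr} => //= ? ?; lia.
  subst rest. rewrite cats0 in Hr. have Hgg : g :: gs' = gs by rewrite -(revK gs) Hr revK.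
  apply: ceq_trans; first exact: lin_single1.
  rewrite op_vg1 /stv /= drop_oversize ?size_rev -?Hs //.
  case: decP => H2; case: decP => H3 //.
  - rewrite /Y0 -Hs. by [].
  - by exfalso; apply: H3; case: H2 => _ ->.
  - by exfalso; apply: H2; split => //; case: H3.
rewrite lin_nil decF // => -[_ E]. apply: H1. exists [::]. by rewrite cats0 E.
Qed.

Lemma key_m D w' gs' z : sn z = sn Y0 ->
  coef (ExV D (evalG (canon (gexp (LEv w') gs')) X)) z =
  if dec (Mo [::] w' gs' = Mo [::] w gs) then coef (Ex D Y0) z else 0.
Proof.
move=> Hz. case: (eqVneq (size gs') (size gs)) => Hs.
  rewrite (ceq_lin _ (ev_eq w' Hs)).
  case: decP => H1; case: decP => H2.
  - by rewrite /ExV lin_single1 /ExD /= subn0.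
  - by exfalso; apply: H2; case: H1 => -> ->.
  - by exfalso; apply: H1; case: H2 => -> ->.
  - by [].
rewrite decF; last by case=> _ E; move: Hs; rewrite E eqxx.
apply: coef_ExV_sn; first exact: gexp_sn_v.
rewrite Hz /Y0 /X /=. move/eqP: Hs. lia.
Qed.

Lemma coef_lcs_base D z L : (forall p, List.In p L -> ma p.2 = [::]) -> sn z = sn Y0 ->
  coef (ExV D (evalG (canon (lcs L)) X)) z = coefM L (Mo [::] w gs) * coef (Ex D Y0) z.
Proof.
move=> HL Hz. elim: L HL => /= [|[r m] L IH] HL; first by rewrite mul0r.
rewrite /ExV lin_cat coef_cat (lin_scalev _ _ _ z) coef_scalev -/(ExV D _) IH; last first.
  by move=> p Hp; apply: HL; right.
have Hm : ma m = [::] by apply: (HL (r, m)); left.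
clear HL; case: m Hm => a w' gs' /= ->. rewrite /mexp /= key_m //.
case: decP => H; rewrite ?mulr0 ?add0r //. ring.
Qed.

Lemma base L : (forall p, List.In p L -> ma p.2 = [::]) -> Zr (lcs L) ->
  coefM L (Mo [::] w gs) = 0.
Proof.
move=> HL HZ. have [D HD] := HZ X.
have [z [Hz _ [u Hu]]] := Ex_unit D (valid_nil w g1 (Z.sub Z0 (Z.of_nat (size gs)))).
have := HD z. rewrite coef_lcs_base // /ExV lin_nil /= => H0.
by rewrite -[coefM _ _]mulr1 -Hu mulrA H0 mul0r.
Qed.
End Base.


Lemma fsum_ext (L : seq Ed) (A B : Ed -> LEX) : (forall f, List.In f L -> A f ~E B f) ->
  fsum L A ~E fsum L B.
Proof.
elim: L => //= f L IH H. rewrite H; last by left.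
by rewrite IH // => g Hg; apply: H; right.
Qed.
Lemma fsum_zero (L : seq Ed) (A : Ed -> LEX) : (forall f, List.In f L -> A f ~E fzero) ->
  fsum L A ~E fzero.
Proof.
move=> H. rewrite (fsum_ext H). clear H. elim: L => //= f L IH. by rewrite IH fc_add0.
Qed.
Lemma fsum_add (L : seq Ed) (A B : Ed -> LEX) :
  fsum L (fun f => fadd (A f) (B f)) ~E fadd (fsum L A) (fsum L B).
Proof.
elim: L => /= [|f L IH]; first by rewrite fc_add0.
rewrite IH. rewrite -!fc_addA. apply: fc_add => //. rewrite !fc_addA.
apply: fc_add => //. exact: fc_addC.
Qed.
Lemma fsum_scale (L : seq Ed) r (A : Ed -> LEX) :
  fsum L (fun f => fscale r (A f)) ~E fscale r (fsum L A).
Proof.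
elim: L => /= [|f L IH]; first by rewrite fscale_zero.
by rewrite IH fc_scaleDr.
Qed.
Lemma fsum_mul (L : seq Ed) (A : Ed -> LEX) b :
  fmul (fsum L A) b ~E fsum L (fun f => fmul (A f) b).
Proof.
elim: L => /= [|f L IH]; first exact: fmul0l.
by rewrite fc_mulDl IH.
Qed.
Lemma fsum_single (L : seq Ed) (A : Ed -> LEX) f0 : List.NoDup L -> List.In f0 L ->
  (forall f, List.In f L -> f <> f0 -> A f ~E fzero) -> fsum L A ~E A f0.
Proof.
elim: L => //= f L IH Hn Hin H. inversion Hn; subst.
case: Hin => [E|Hin].
  subst f. rewrite fsum_zero ?fadd0r //. move=> g Hg. apply: H; first by right.
  by move=> E; subst.
rewrite H; first by rewrite fc_add0 IH // => g Hg; apply: H; right.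
- by left.
- by move=> E; subst.
Qed.

Lemma In_filter (A : Type) (P : pred A) (s : seq A) x : List.In x (filter P s) <-> List.In x s /\ P x.
Proof.
elim: s => //= [|y s IH]; first by split => // -[].
case Hy: (P y) => /=; rewrite IH; split.
- by case=> [<-|[]]; [split=> //; left|split => //; right].
- by case=> [[<-|H] Hx]; [left|right].
- by case=> H1 H2; split => //; right.
- by case=> [[E|H] Hx]; [subst; rewrite Hy in Hx|].
Qed.

Definition meas (L : lcm) : nat := sumn (map (fun p => size (ma p.2)) L).

Lemma coefM_filter (L : lcm) m m' : m' <> m ->
  coefM (filter (fun p => ~~ dec (p.2 = m)) L) m' = coefM L m'.
Proof.
move=> H. elim: L => //= p L IH. case: (decP (p.2 = m)) => H1 /=.
  by rewrite decF ?add0r // => E; apply: H; rewrite -E.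
by rewrite IH.
Qed.
Lemma lcs_split L m : lcs L ~E
  fadd (fscale (coefM L m) (mexp m)) (lcs (filter (fun p => ~~ dec (p.2 = m)) L)).
Proof.
elim: L => /= [|[r m'] L IH]; first by rewrite fscale0 fc_add0.
rewrite IH. case: (decP (m' = m)) => H /=.
  subst m'. by rewrite fc_addA fscale_r_add.
rewrite add0r !fc_addA. apply: fc_add => //. exact: fc_addC.
Qed.
Lemma group0 n : forall L, (size L <= n)%N ->
  (forall p, List.In p L -> coefM L p.2 = 0 \/ mexp p.2 ~E fzero) -> lcs L ~E fzero.
Proof.
elim: n => [|n IH] L Hs H; first by case: L Hs H.
case: L Hs H => [|[r m] L'] Hs H; first by [].
rewrite (lcs_split _ m).
rewrite (IH (filter (fun p => ~~ dec (p.2 = m)) ((r, m) :: L'))).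
- rewrite fadd0r. case: (H (r, m)) => /= [|->|->]; first by left.
  + by rewrite fscale0.
  + by rewrite fscale_zero.
- rewrite /= decT //= size_filter. have := count_size (fun p => ~~ dec (p.2 = m)) L'. move: Hs => /=. lia.
- move=> p /In_filter [Hp /negP Hd]. rewrite coefM_filter; last by move=> E; apply: Hd; rewrite E decT.
  exact: H.
Qed.

Lemma lcs_filter_split (P : pred (l * mono)) L :
  lcs L ~E fadd (lcs (filter P L)) (lcs (filter (predC P) L)).
Proof.
elim: L => /= [|p L IH]; first by rewrite fc_add0.
rewrite IH. case: (P p) => /=; first by rewrite fc_addA.
rewrite !fc_addA. apply: fc_add => //. exact: fc_addC.
Qed.
Lemma meas_filter (P : pred (l * mono)) L :
  meas L = (meas (filter P L) + meas (filter (predC P) L))%N.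
Proof. rewrite /meas. elim: L => //= p L IH. case: (P p) => /=; lia. Qed.
Lemma meas_in p L : List.In p L -> (size (ma p.2) <= meas L)%N.
Proof. rewrite /meas. elim: L => //= q L IH [<-|H]; first by lia. have := IH H. lia. Qed.
Lemma lcs_zero_coef L : (forall p, List.In p L -> p.1 = 0) -> lcs L ~E fzero.
Proof.
elim: L => //= p L IH H. rewrite IH; last by move=> q Hq; apply: H; right.
by rewrite (H p) ?fscale0 ?fadd0r //; left.
Qed.
Lemma lcs_vL_all v L : (forall p, List.In p L -> v = mstart p.2) -> lcs (vL v L) ~E lcs L.
Proof.
elim: L => //= p L IH H. rewrite IH; last by move=> q Hq; apply: H; right.
by rewrite decT //; apply: H; left.
Qed.
Lemma lcs_vL_filter v L : lcs (vL v L) ~E lcs (filter (fun p => dec (v = mstart p.2)) L).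
Proof.
elim: L => //= p L IH. rewrite IH. case: decP => H //=.
by rewrite fscale0 fc_add0.
Qed.
Definition isnil (p : l * mono) : bool := if ma p.2 is [::] then true else false.
Lemma meas_sL e L : (meas (sL e L) + count (predC isnil) L)%N = meas L.
Proof.
rewrite /meas /isnil. elim: L => //= [[r [a w gs]]] L IH /=.
case: a => [|f a] /=; lia.
Qed.
Lemma count_in (A : Type) (P : pred A) (s : seq A) x : List.In x s -> P x -> (0 < count P s)%N.
Proof. elim: s => //= y s IH [<-|H] Hx; first by rewrite Hx. have := IH H Hx. lia. Qed.
Lemma meas_sL_lt e L p : List.In p L -> ma p.2 <> [::] -> (meas (sL e L) < meas L)%N.
Proof.
move=> Hp Hn. rewrite -(meas_sL e L). have : (0 < count (predC isnil) L)%N.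
  apply: (count_in Hp). rewrite /isnil /=. by case: (ma p.2) Hn.
lia.
Qed.
Lemma sub_self (A B : LEX) : fadd (fadd A B) (fscale (-1) A) ~E B.
Proof.
by rewrite fc_addC fc_addA fc_addN fc_add0.
Qed.

Lemma coefM_sL0 e L gs : (forall p, List.In p L -> ma p.2 = [::] /\ mw p.2 = sg e) ->
  coefM (sL e L) (Mo [::] (rg e) (e :: gs)) = coefM L (Mo [::] (sg e) gs).
Proof.
elim: L => //= [[r [a w gs']]] L IH H /=.
have [Ha Hw] := H (r, Mo a w gs') (or_introl erefl). simpl in Ha, Hw. subst a w.
rewrite IH; last by move=> q Hq; apply: H; right.
rewrite /= (@decT (sg e = sg e)) //. case: decP => H1; case: decP => H2 //.
- by exfalso; apply: H2; case: H1 => ->.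
- by exfalso; apply: H1; case: H2 => ->.
Qed.

Fixpoint ddE (s : seq Ed) : seq Ed :=
  if s is x :: s' then (if dec (List.In x s') then ddE s' else x :: ddE s') else [::].
Lemma ddE_in s x : List.In x (ddE s) <-> List.In x s.
Proof.
elim: s => //= y s IH. case: decP => H.
  by rewrite IH; split; [right|case=> // <-].
by rewrite /= IH.
Qed.
Lemma ddE_nodup s : List.NoDup (ddE s).
Proof.
elim: s => /= [|y s IH]; first by constructor.
case: decP => H //; constructor => //. by rewrite ddE_in.
Qed.

Lemma fresh_edge v (Hd : seq Ed) e0 : ~ regular v -> sg e0 = v ->
  (forall f, List.In f Hd -> sg f = v) -> exists e, sg e = v /\ ~ List.In e Hd.
Proof.
move=> Hr He0 HH. apply: NNPP => Hn. apply: Hr. exists (ddE Hd).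
have Hall : forall e, sg e = v -> List.In e Hd.
  move=> e He. apply: NNPP => Hne. apply: Hn. by exists e.
split; last split.
- have : List.In e0 (ddE Hd) by rewrite ddE_in; apply: Hall.
  by case: (ddE Hd).
- exact: ddE_nodup.
- move=> e. rewrite ddE_in. split; [exact: HH|exact: Hall].
Qed.

Definition heads (L : lcm) : seq Ed :=
  foldr (fun p acc => if ma p.2 is f :: _ then f :: acc else acc) [::] L.
Lemma heads_in L p f a : List.In p L -> ma p.2 = f :: a -> List.In f (heads L).
Proof.
elim: L => //= q L IH [<-|H] Hm; first by rewrite Hm; left.
case: (ma q.2) => [|g b]; [exact: IH|right; exact: IH].
Qed.
Lemma heads_inv L f : List.In f (heads L) -> exists p a, List.In p L /\ ma p.2 = f :: a.
Proof.
elim: L => //= q L IH. case Hq: (ma q.2) => [|g b].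
  by move/IH => [p [a [H1 H2]]]; exists p, a; split => //; right.
case=> [E|H]; first by subst g; exists q, b; split => //; left.
by case: (IH H) => p [a [H1 H2]]; exists p, a; split => //; right.
Qed.

Lemma mono_ee (Hd : seq Ed) m f0 a : List.NoDup Hd -> ma m = f0 :: a -> List.In f0 Hd ->
  fsum Hd (fun f => fmul (ve f) (fmul (vs f) (mexp m))) ~E mexp m.
Proof.
move=> Hn Hm Hin. rewrite (@fsum_single _ _ f0) //.
  rewrite L_s Hm. case: decP => H.
    by rewrite /mexp Hm.
  rewrite fmul0r /mexp Hm /=. symmetry. have := L_e f0 (Mo a (mw m) (mg m)).
  rewrite /mexp /mstart /= => ->. rewrite decF //. by move=> E; apply: H.
move=> f Hf Hne. rewrite L_s Hm decF ?fmul0r // => -[E _]. by apply: Hne.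
Qed.
Lemma sum_ee (Hd : seq Ed) L : List.NoDup Hd ->
  (forall p, List.In p L -> exists f a, ma p.2 = f :: a /\ List.In f Hd) ->
  fsum Hd (fun f => fmul (ve f) (fmul (vs f) (lcs L))) ~E lcs L.
Proof.
move=> Hn. elim: L => /= [|p L IH] H.
  by apply: fsum_zero => f _; rewrite !fmul0r.
have [f0 [a [Hm Hin]]] := H p (or_introl erefl).
rewrite (@fsum_ext _ _ (fun f => fadd (fscale p.1 (fmul (ve f) (fmul (vs f) (mexp p.2))))
                                   (fmul (ve f) (fmul (vs f) (lcs L))))).
  rewrite fsum_add fsum_scale (mono_ee Hn Hm Hin) IH //.
  by move=> q Hq; apply: H; right.
move=> f _. by rewrite !fc_mulDr !fc_scaler.
Qed.


Lemma base_route L : (forall p, List.In p L -> ma p.2 = [::]) -> Zr (lcs L) -> lcs L ~E fzero.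
Proof.
move=> Hall HZ. apply: (@group0 (size L)) => // p Hp.
case Hm: p.2 => [a w gs]. have Ha : a = [::] by rewrite -(Hall p Hp) Hm.
subst a. case: (classic (gval w gs)) => Hg.
  left. rewrite -Hm. have := base Hg Hall HZ. by rewrite Hm.
right. exact: gval_zero.
Qed.

Lemma step n L : (forall L', (meas L' <= n)%N -> Zr (lcs L') -> lcs L' ~E fzero) ->
  (meas L <= n.+1)%N -> Zr (lcs L) -> forall p0, List.In p0 L -> ma p0.2 <> [::] ->
  lcs L ~E fzero.
Proof.
move=> IH Hm HZ p0 Hp0 Hne0.
case Hm0: (ma p0.2) Hne0 => [//|e0 a0] _.
set v := sg e0.
set P := fun p : l * mono => dec (v = mstart p.2).
set Ly := filter P L. set Lr := filter (predC P) L.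
have HL := lcs_filter_split P L. rewrite -/Ly -/Lr in HL.
have Hp0y : List.In p0 Ly by apply/In_filter; split => //; rewrite /P decT // /mstart Hm0.
have Hmeas := meas_filter P L. rewrite -/Ly -/Lr in Hmeas.
have Hmy := meas_in Hp0y. rewrite Hm0 /= in Hmy.
have ZLy : Zr (lcs Ly).
  apply: (@Zr_cong (fmul (vv v) (lcs L))); last exact: Zr_mul.
  by rewrite LL_v lcs_vL_filter.
have ZLr : Zr (lcs Lr).
  apply: (@Zr_cong (fadd (lcs L) (fscale (-1) (lcs Ly)))); last by apply: Zr_add => //; apply: Zr_scale.
  by rewrite HL sub_self.
have HLr : lcs Lr ~E fzero by apply: IH => //; lia.
rewrite HL HLr fadd0r.
have Hvy : forall p, List.In p Ly -> v = mstart p.2.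
  by move=> p /In_filter [_ H]; move: H; rewrite /P; case: decP.
have HyV : lcs Ly ~E fmul (vv v) (lcs Ly) by rewrite LL_v lcs_vL_all.
have Hsub : forall e Lz, (meas Lz <= meas Ly)%N -> List.In p0 Lz -> Zr (fmul (vs e) (lcs Lz)) ->
    fmul (ve e) (fmul (vs e) (lcs Lz)) ~E fzero.
  move=> e Lz Hz Hin HZz. rewrite LL_s IH ?fmul0r //.
    have := meas_sL_lt e Hin. rewrite Hm0 => H. have := H ltac:(by []). lia.
  by apply: (Zr_cong (LL_s e Lz)).
case: (classic (regular v)) => Hreg.
  have Hen := fib_enum Hreg.
  rewrite HyV (fc_rel (@LEr_CK2 l _ _ _ Hen)) fsum_mul. apply: fsum_zero => e _.
  rewrite -fc_mulA. apply: Hsub => //. exact: Zr_mul.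
set Ly0 := filter isnil Ly. set Ly1 := filter (predC isnil) Ly.
have HLy := lcs_filter_split isnil Ly. rewrite -/Ly0 -/Ly1 in HLy.
have Hp0y1 : List.In p0 Ly1 by apply/In_filter; split => //; rewrite /isnil /= Hm0.
have Hheads : forall f, List.In f (heads Ly1) -> sg f = v.
  move=> f /heads_inv [p [a [Hp Hma]]]. have Hpy : List.In p Ly by case/In_filter: Hp.
  have := Hvy p Hpy. rewrite /mstart Hma /= => E. by rewrite E.
have [e [He Hnin]] := fresh_edge Hreg (erefl v) Hheads.
have ZLy0 : Zr (lcs (sL e Ly0)).
  apply: (@Zr_cong (fmul (vs e) (lcs Ly))); last exact: Zr_mul.
  rewrite HLy fc_mulDr !LL_s (@lcs_zero_coef (sL e Ly1)) ?fadd0r //.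
  move=> q /List.in_map_iff [p [<- Hp]].
  have Hp1 := Hp. case/In_filter: Hp => Hp Hn. rewrite /isnil /= in Hn.
  case Hma: (ma p.2) Hn => [//|f a] _. rewrite decF // => -[E _].
  apply: Hnin. rewrite -E. exact: heads_in Hp1 Hma.
have HLy0 : lcs Ly0 ~E fzero.
  apply: (@group0 (size Ly0)) => // p Hp.
  have [Hpy Hpn] := proj1 (In_filter _ _ _) Hp.
  case Hm2 : p.2 => [a w gs]. rewrite /isnil Hm2 /= in Hpn. case: a Hm2 Hpn => // Hm2 _.
  have Hw : w = v.
    have := Hvy p Hpy. rewrite Hm2 /mstart /= => E. by rewrite E.
  case: (classic (gval w gs)) => Hg; last by right; rewrite /mexp /=; apply: gval_zero.
  left. subst w.
  have Hall : forall q, List.In q Ly0 -> ma q.2 = [::] /\ mw q.2 = sg e.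
    move=> q Hq. have [Hqy Hqn] := proj1 (In_filter _ _ _) Hq. rewrite /isnil in Hqn.
    case Hq2 : q.2 => [b w' gs']. rewrite Hq2 in Hqn. case: b Hq2 Hqn => // Hq2 _.
    split => //. have := Hvy q Hqy. rewrite Hq2 /mstart /= => E. by rewrite He E.
  rewrite -He in Hg *. rewrite -(coefM_sL0 gs Hall).
  apply: (@base (rg e) (e :: gs) _ (sL e Ly0) _ ZLy0).
    by rewrite /=; split.
  move=> q /List.in_map_iff [p' [<- Hp']] /=. have [H1 _] := Hall p' Hp'. by rewrite H1.
rewrite HLy HLy0 fc_add0.
have ZLy1 : Zr (lcs Ly1) by apply: (Zr_cong _ ZLy); rewrite HLy HLy0 fc_add0.
have HmLy1 : (meas Ly1 <= meas Ly)%N by rewrite (meas_filter isnil Ly) -/Ly0 -/Ly1; lia.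
rewrite -(@sum_ee (ddE (heads Ly1)) Ly1); last 2 first.
- exact: ddE_nodup.
- move=> p Hp. case Hma: (ma p.2) => [|f a].
    by case/In_filter: Hp => _; rewrite /isnil /= Hma.
  exists f, a; split => //. rewrite ddE_in. exact: heads_in Hp Hma.
apply: fsum_zero => f _. apply: Hsub => //.
exact: Zr_mul.
Qed.

Lemma faithful n : forall L, (meas L <= n)%N -> Zr (lcs L) -> lcs L ~E fzero.
Proof.
elim: n => [|n IH] L Hm HZ.
  apply: base_route => // p Hp. have := meas_in Hp. case: (ma p.2) => //= f a. lia.
case: (classic (exists p, List.In p L /\ ma p.2 <> [::])) => [[p0 [Hp0 Hne]]|Hall].
  exact: (step IH Hm HZ Hp0 Hne).
apply: base_route => // p Hp. apply: NNPP => Hne. apply: Hall. by exists p.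
Qed.

Lemma Zr_diff (a b : LEX) : canon a ~G canon b -> Zr (fadd a (fscale (-1) b)).
Proof.
move=> H x. have Hs := evalG_sound H x.
rewrite [evalG _ _]/=.
apply: approx_trans; first exact: approx_cat Hs (approx_refl _).
apply: ceq_approx => y. rewrite coef_cat coef_scalev /=. ring.
Qed.

Theorem main (a b : LEX) : a ~E b <-> canon a ~G canon b.
Proof.
split; first exact: canon_cong.
move=> H. apply: fsub_eq.
have [L HL] := nf (fadd a (fscale (-1) b)).
rewrite HL. apply: (@faithful (meas L)) => //.
exact: Zr_cong HL (Zr_diff H).
Qed.


End Main.

Theorem proposition3p9 (l : comPzRingType) (T : twisted_EP l)
  (a b : fexpr l (LE_gen (epE T))) :
  fcong (@LE_rel l (epE T)) a b <-> fcong (@LG_rel l T) (@canon l T a) (@canon l T b).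
Proof. exact: main. Qed.
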